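(* Let $D=\{x\in\mathbb{R}^m:\|x\|_\infty\le\rho\}$, $r\ge1$, let $B_0,\ldots,B_N$ be real $d\times d$ matrices with $B_0$ invertible, and let $\Lambda$ be a real $m\times m$ matrix. Suppose there is a real number $\mu$ with (1) $\|\Lambda\|^r\le\mu<1$, and (2) $\sum_{i=1}^N\mu^i\|B_0^{-1}B_i\|<1$. Then the linear operator $\mathcal{L}:H_r\to H_r$, $\mathcal{L}\varphi=\sum_{j=0}^NB_j(\varphi\circ\Lambda^j)$, is well defined and invertible with bounded inverse.
   Context: $\|\cdot\|_\infty$ is the sup norm on $\mathbb{R}^m$ and $\mathbb{R}^d$; matrix norms are the corresponding operator norms. For a $k$-linear map $B$, $\|B\|=\sup\{\|B(\xi_1,\ldots,\xi_k)\|_\infty:\|\xi_i\|_\infty=1\}$. $H_r=\{P\in C^r(D,\mathbb{R}^d): D^iP(0)=0 \text{ for } 0\le i\le r-1\}$, a Banach space with the norm $\|P\|'_r=\sup_{x\in D}\|D^rP(x)\|$. ($\mathcal{L}$ is the derivative at $0$ of the parameterization operator $\Phi(P)(z)=Z(P(z),P(\Lambda z),\ldots,P(\Lambda^Nz))$ when $B_j=\partial_jZ(0)$.) *)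

(* Defs.v *)
From mathcomp Require Import ssreflect ssrfun ssrbool eqtype ssrnat seq fintype bigop.
From Stdlib Require Import Reals ClassicalEpsilon.
Set Implicit Arguments. Unset Strict Implicit.
Open Scope R_scope.

Definition vec (n : nat) := 'I_n -> R.
Definition mat (n p : nat) := 'I_n -> 'I_p -> R.

Definition vadd {n} (x y : vec n) : vec n := fun i => x i + y i.
Definition vsub {n} (x y : vec n) : vec n := fun i => x i - y i.
Definition vscale {n} (a : R) (x : vec n) : vec n := fun i => a * x i.
Definition vzero {n} : vec n := fun _ => 0.

Definition vnorm {n} (x : vec n) : R := \big[Rmax/0]_(i < n) Rabs (x i).

Definition mv {n p} (A : mat n p) (x : vec p) : vec n :=
  fun i => \big[Rplus/0]_(j < p) (A i j * x j).
Definition mmul {n p q} (A : mat n p) (B : mat p q) : mat n q :=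
  fun i k => \big[Rplus/0]_(j < p) (A i j * B j k).
Definition mid {n} : mat n n := fun i j => if i == j then 1 else 0.
Fixpoint mpow {n} (A : mat n n) (k : nat) : mat n n :=
  match k with O => mid | S k' => mmul A (mpow A k') end.

Definition Rsup (E : R -> Prop) : R := epsilon (inhabits 0) (fun s => is_lub E s).

(* operator norm of a matrix w.r.t. the sup norms
   (0 is added to the set only to cover the degenerate case p = 0) *)
Definition opnorm {n p} (A : mat n p) : R :=
  Rsup (fun t => t = 0 \/ exists x : vec p, vnorm x = 1 /\ t = vnorm (mv A x)).

(* A k-linear map (R^m)^k -> R^d is represented as a map on sequences
   xi : nat -> vec m, of which only xi 0, ..., xi (k-1) are used. *)
Definition mlmap (m d : nat) := (nat -> vec m) -> vec d.

Definition upd {m} (xi : nat -> vec m) (i : nat) (u : vec m) : nat -> vec m :=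
  fun j => if Nat.eqb j i then u else xi j.
Definition scons {m} (h : vec m) (xi : nat -> vec m) : nat -> vec m :=
  fun j => match j with O => h | S j' => xi j' end.

Definition is_multilinear {m d} (k : nat) (T : mlmap m d) : Prop :=
  (forall xi xi' : nat -> vec m, (forall i, (i < k)%nat -> xi i = xi' i) -> T xi = T xi') /\
  (forall (xi : nat -> vec m) (i : nat) (a b : R) (u v : vec m), (i < k)%nat ->
     T (upd xi i (vadd (vscale a u) (vscale b v))) =
     vadd (vscale a (T (upd xi i u))) (vscale b (T (upd xi i v)))).

Definition mlnorm {m d} (k : nat) (T : mlmap m d) : R :=
  Rsup (fun t => t = 0 \/ exists xi : nat -> vec m,
          (forall i, (i < k)%nat -> vnorm (xi i) = 1) /\ t = vnorm (T xi)).

Definition inD {m} (rho : R) (x : vec m) : Prop := vnorm x <= rho.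

(* DP is a family of derivatives (DP k x = D^k P(x), a k-linear map) of a
   C^r map P on D: DP 0 = P, DP (k+1) is the Frechet derivative (relative
   to D) of x |-> DP k x in the multilinear operator norm, and DP r is
   continuous on D. *)
Definition Cr_family {m d} (rho : R) (r : nat) (P : vec m -> vec d)
  (DP : nat -> vec m -> mlmap m d) : Prop :=
  (forall x, inD rho x -> forall xi, DP 0%nat x xi = P x) /\
  (forall k x, (k <= r)%nat -> inD rho x -> is_multilinear k (DP k x)) /\
  (forall k x, (k < r)%nat -> inD rho x -> forall eps, 0 < eps ->
     exists delta, 0 < delta /\ forall y, inD rho y -> vnorm (vsub y x) < delta ->
       forall xi : nat -> vec m, (forall i, (i < k)%nat -> vnorm (xi i) <= 1) ->
         vnorm (vsub (vsub (DP k y xi) (DP k x xi)) (DP k.+1 x (scons (vsub y x) xi)))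
           <= eps * vnorm (vsub y x)) /\
  (forall x, inD rho x -> forall eps, 0 < eps ->
     exists delta, 0 < delta /\ forall y, inD rho y -> vnorm (vsub y x) < delta ->
       forall xi : nat -> vec m, (forall i, (i < r)%nat -> vnorm (xi i) <= 1) ->
         vnorm (vsub (DP r y xi) (DP r x xi)) <= eps).

Definition is_Cr {m d} (rho : R) (r : nat) (P : vec m -> vec d) : Prop :=
  exists DP, Cr_family rho r P DP.

Definition inH {m d} (rho : R) (r : nat) (P : vec m -> vec d) : Prop :=
  exists DP, Cr_family rho r P DP /\
    forall i, (i < r)%nat -> forall xi, DP i vzero xi = vzero.

Definition derivs {m d} (rho : R) (r : nat) (P : vec m -> vec d)
  : nat -> vec m -> mlmap m d :=
  epsilon (inhabits (fun _ _ _ => vzero)) (fun DP => Cr_family rho r P DP).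

Definition Hnorm {m d} (rho : R) (r : nat) (P : vec m -> vec d) : R :=
  Rsup (fun t => exists x, inD rho x /\ t = mlnorm r (derivs rho r P r x)).

Definition Lop {m d} (N : nat) (B : nat -> mat d d) (Lam : mat m m)
  (phi : vec m -> vec d) : vec m -> vec d :=
  fun x l => \big[Rplus/0]_(j < N.+1) mv (B j) (phi (mv (mpow Lam j) x)) l.

(* Main.v *)
Require Import Defs.
From mathcomp Require Import ssreflect ssrfun ssrbool eqtype ssrnat seq fintype bigop.
From Stdlib Require Import Reals ClassicalEpsilon.
From HB Require Import structures.
From Stdlib Require Import FunctionalExtensionality Lra Lia Classical.
From Coquelicot Require Import Coquelicot.
Open Scope R_scope.

Set Implicit Arguments. Unset Strict Implicit.

Lemma Rplus_0_r' : right_id 0 Rplus. Proof. move=> x; ring. Qed.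
Lemma Rplus_0_l' : left_id 0 Rplus. Proof. move=> x; ring. Qed.
Lemma Rplus_assoc' : associative Rplus. Proof. move=> x y z; ring. Qed.
Lemma Rplus_comm' : commutative Rplus. Proof. move=> x y; ring. Qed.
Lemma Rmult_0_l' : left_zero 0 Rmult. Proof. move=> x; ring. Qed.
Lemma Rmult_0_r' : right_zero 0 Rmult. Proof. move=> x; ring. Qed.
Lemma Rdl' : left_distributive Rmult Rplus. Proof. move=> x y z; ring. Qed.
Lemma Rdr' : right_distributive Rmult Rplus. Proof. move=> x y z; ring. Qed.
HB.instance Definition _ := Monoid.isComLaw.Build R 0 Rplus Rplus_assoc' Rplus_comm' Rplus_0_l'.
HB.instance Definition _ := Monoid.isMulLaw.Build R 0 Rmult Rmult_0_l' Rmult_0_r'.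
HB.instance Definition _ := Monoid.isAddLaw.Build R Rmult Rplus Rdl' Rdr'.


Lemma big_Rmax_ge_seq (T : eqType) (s : seq T) (F : T -> R) j :
  j \in s -> F j <= \big[Rmax/0]_(i <- s) F i.
Proof.
elim: s => [|a s IH] //=; rewrite in_cons big_cons => /orP [/eqP ->|H].
- apply Rmax_l.
- apply: Rle_trans (IH H) _; apply Rmax_r.
Qed.

Lemma big_Rmax_ge n (F : 'I_n -> R) j : F j <= \big[Rmax/0]_(i < n) F i.
Proof. by apply: big_Rmax_ge_seq; rewrite mem_index_enum. Qed.

Lemma big_Rmax_le n (F : 'I_n -> R) c : 0 <= c -> (forall i, F i <= c) ->
  \big[Rmax/0]_(i < n) F i <= c.
Proof.
move=> c0 H; apply: (big_ind (fun x => x <= c)) => //.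
move=> x y Hx Hy; by apply Rmax_lub.
Qed.

Lemma big_Rmax_lt n (F : 'I_n -> R) c : 0 < c -> (forall i, F i < c) ->
  \big[Rmax/0]_(i < n) F i < c.
Proof.
move=> c0 H; apply: (big_ind (fun x => x < c)) => //.
move=> x y Hx Hy; by apply Rmax_lub_lt.
Qed.

Lemma big_Rmax_ge0 n (F : 'I_n -> R) : 0 <= \big[Rmax/0]_(i < n) F i.
Proof.
apply: (big_rec (fun x => 0 <= x)); first lra.
move=> i x _ Hx; apply: Rle_trans Hx _; apply Rmax_r.
Qed.

Lemma sumR_le (I : Type) (s : seq I) (P : pred I) (F G : I -> R) :
  (forall i, P i -> F i <= G i) ->
  \big[Rplus/0]_(i <- s | P i) F i <= \big[Rplus/0]_(i <- s | P i) G i.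
Proof.
move=> H; apply: (big_ind2 (fun x y => x <= y)) => //; first lra.
move=> ? ? ? ? ? ?; lra.
Qed.

Lemma sumR_ge0 (I : Type) (s : seq I) (P : pred I) (F : I -> R) :
  (forall i, P i -> 0 <= F i) -> 0 <= \big[Rplus/0]_(i <- s | P i) F i.
Proof.
move=> H; apply: (big_ind (fun x => 0 <= x)) => //; first lra.
move=> ? ? ? ?; lra.
Qed.

Lemma sumR_abs (I : Type) (s : seq I) (P : pred I) (F : I -> R) :
  Rabs (\big[Rplus/0]_(i <- s | P i) F i) <= \big[Rplus/0]_(i <- s | P i) Rabs (F i).
Proof.
apply: (big_ind2 (fun x y => Rabs x <= y)).
- rewrite Rabs_R0; lra.
- move=> x1 x2 y1 y2 H1 H2; apply: Rle_trans (Rabs_triang _ _) _; lra.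
- move=> i _; lra.
Qed.

Lemma sumR_ge_term n (F : 'I_n -> R) j : (forall i, 0 <= F i) ->
  F j <= \big[Rplus/0]_(i < n) F i.
Proof.
move=> H; rewrite (bigD1 j) //=.
match goal with |- _ <= _ + ?S => have : 0 <= S by apply sumR_ge0 end.
lra.
Qed.

Lemma sumR_opp (I : Type) (s : seq I) (P : pred I) (F : I -> R) :
  \big[Rplus/0]_(i <- s | P i) (- F i) = - \big[Rplus/0]_(i <- s | P i) F i.
Proof.
apply: (big_ind2 (fun x y => x = - y)); first lra.
- move=> ? ? ? ? -> ->; lra.
- by [].
Qed.

Lemma vnorm_ge0 n (x : vec n) : 0 <= vnorm x.
Proof. rewrite /vnorm; apply big_Rmax_ge0. Qed.

Lemma vnorm_coord n (x : vec n) i : Rabs (x i) <= vnorm x.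
Proof. rewrite /vnorm; apply: (big_Rmax_ge (fun i => Rabs (x i))). Qed.

Lemma vnorm_le n (x : vec n) c : 0 <= c -> (forall i, Rabs (x i) <= c) -> vnorm x <= c.
Proof. by move=> c0 H; rewrite /vnorm; apply big_Rmax_le. Qed.

Lemma vnorm_lt n (x : vec n) c : 0 < c -> (forall i, Rabs (x i) < c) -> vnorm x < c.
Proof. by move=> c0 H; rewrite /vnorm; apply big_Rmax_lt. Qed.

Lemma vnorm_zero n : vnorm (@vzero n) = 0.
Proof.
apply Rle_antisym; last apply vnorm_ge0.
apply vnorm_le; first lra. move=> i; rewrite /vzero Rabs_R0; lra.
Qed.

Lemma vnorm_eq0 n (x : vec n) : vnorm x = 0 -> x = vzero.
Proof.
move=> H; apply functional_extensionality => i.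
have := vnorm_coord x i; rewrite H /vzero => Hi.
have := Rabs_pos (x i). move=> Hp.
have : Rabs (x i) = 0 by lra.
move=> H1; case: (Req_dec (x i) 0) => // Hne; have := Rabs_no_R0 _ Hne; done.
Qed.

Lemma vnorm_add n (x y : vec n) : vnorm (vadd x y) <= vnorm x + vnorm y.
Proof.
apply vnorm_le. have := vnorm_ge0 x; have := vnorm_ge0 y; lra.
move=> i; rewrite /vadd; apply: Rle_trans (Rabs_triang _ _) _.
have := vnorm_coord x i; have := vnorm_coord y i; lra.
Qed.

Lemma vnorm_sub n (x y : vec n) : vnorm (vsub x y) <= vnorm x + vnorm y.
Proof.
apply vnorm_le. have := vnorm_ge0 x; have := vnorm_ge0 y; lra.
move=> i; rewrite /vsub; apply: Rle_trans (Rabs_triang _ _) _.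
rewrite Rabs_Ropp.
have := vnorm_coord x i; have := vnorm_coord y i; lra.
Qed.

Lemma vnorm_scale_le n a (x : vec n) : vnorm (vscale a x) <= Rabs a * vnorm x.
Proof.
apply vnorm_le. apply Rmult_le_pos; [apply Rabs_pos|apply vnorm_ge0].
move=> i; rewrite /vscale Rabs_mult; apply Rmult_le_compat_l; [apply Rabs_pos|apply vnorm_coord].
Qed.

Lemma vnorm_scale n a (x : vec n) : vnorm (vscale a x) = Rabs a * vnorm x.
Proof.
apply Rle_antisym; first apply vnorm_scale_le.
case: (Req_dec a 0) => [->|Ha].
- rewrite Rabs_R0 Rmult_0_l; apply vnorm_ge0.
- have Hx : x = vscale (/ a) (vscale a x).
    apply functional_extensionality => i; rewrite /vscale; field; done.
  have H := vnorm_scale_le (/ a) (vscale a x).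
  rewrite -Hx Rabs_inv in H.
  have Hp : 0 < Rabs a by apply Rabs_pos_lt.
  have H2 : Rabs a * vnorm x <= Rabs a * (/ Rabs a * vnorm (vscale a x)).
    apply Rmult_le_compat_l; lra.
  rewrite -Rmult_assoc Rinv_r in H2; lra.
Qed.

Lemma vsub_eq0 n (x y : vec n) : vnorm (vsub x y) = 0 -> x = y.
Proof.
move=> /vnorm_eq0 H; apply functional_extensionality => i.
have : vsub x y i = vzero i by rewrite H.
rewrite /vsub /vzero; lra.
Qed.

Lemma vnorm_normalize n (h : vec n) : vnorm h <> 0 ->
  vnorm (vscale (/ vnorm h) h) = 1 /\ h = vscale (vnorm h) (vscale (/ vnorm h) h).
Proof.
move=> H; have H0 := vnorm_ge0 h; split.
- rewrite vnorm_scale Rabs_inv Rabs_right; last lra. field; done.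
- apply functional_extensionality => i; rewrite /vscale; field; done.
Qed.

Lemma mv_add n p (A : mat n p) x y : mv A (vadd x y) = vadd (mv A x) (mv A y).
Proof.
apply functional_extensionality => i; rewrite /mv /vadd -big_split /=.
apply eq_bigr => j _; ring.
Qed.

Lemma mv_scale n p (A : mat n p) a x : mv A (vscale a x) = vscale a (mv A x).
Proof.
apply functional_extensionality => i; rewrite /mv /vscale big_distrr /=.
apply eq_bigr => j _; ring.
Qed.

Lemma mv_zero n p (A : mat n p) : mv A vzero = vzero.
Proof.
apply functional_extensionality => i; rewrite /mv /vzero big1 // => j _; ring.
Qed.

Lemma mv_sub n p (A : mat n p) x y : mv A (vsub x y) = vsub (mv A x) (mv A y).
Proof.
apply functional_extensionality => i; rewrite /mv /vsub.
rewrite /Rminus -sumR_opp -big_split /=. apply eq_bigr => j _; ring.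
Qed.

Lemma mv_lin n p (A : mat n p) a b x y :
  mv A (vadd (vscale a x) (vscale b y)) = vadd (vscale a (mv A x)) (vscale b (mv A y)).
Proof. by rewrite mv_add !mv_scale. Qed.

Lemma mv_mmul n p q (A : mat n p) (C : mat p q) x : mv (mmul A C) x = mv A (mv C x).
Proof.
apply functional_extensionality => i; rewrite /mv /mmul.
under eq_bigr => k _ do rewrite big_distrl /=.
rewrite exchange_big /=. apply eq_bigr => j _.
rewrite big_distrr /=. apply eq_bigr => k _; ring.
Qed.

Lemma mv_mid n (x : vec n) : mv mid x = x.
Proof.
apply functional_extensionality => i; rewrite /mv /mid (bigD1 i) //= eqxx.
rewrite big1; first ring.
move=> j /negbTE; rewrite eq_sym => ->; ring.
Qed.

Lemma mpow_add n (A : mat n n) a b x :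
  mv (mpow A (a + b)) x = mv (mpow A a) (mv (mpow A b) x).
Proof.
elim: a => [|a IH] /=; first by rewrite mv_mid.
by rewrite !mv_mmul IH.
Qed.

Lemma mpowS' n (A : mat n n) a x : mv (mpow A a.+1) x = mv (mpow A a) (mv A x).
Proof.
have -> : a.+1 = (a + 1)%nat by rewrite addn1.
by rewrite mpow_add /= mv_mmul mv_mid.
Qed.

Definition mtot {n p} (A : mat n p) : R :=
  \big[Rplus/0]_(i < n) \big[Rplus/0]_(j < p) Rabs (A i j).

Lemma mtot_ge0 n p (A : mat n p) : 0 <= mtot A.
Proof. apply sumR_ge0 => i _; apply sumR_ge0 => j _; apply Rabs_pos. Qed.

Lemma mv_bound_tot n p (A : mat n p) x : vnorm (mv A x) <= mtot A * vnorm x.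
Proof.
apply vnorm_le. apply Rmult_le_pos; [apply mtot_ge0|apply vnorm_ge0].
move=> i; rewrite /mv; apply: Rle_trans (sumR_abs _ _ _) _.
apply: (Rle_trans _ ((\big[Rplus/0]_(j < p) Rabs (A i j)) * vnorm x)).
- rewrite big_distrl /=; apply sumR_le => j _; rewrite Rabs_mult.
  apply Rmult_le_compat_l; [apply Rabs_pos|apply vnorm_coord].
- apply Rmult_le_compat_r; first apply vnorm_ge0.
  have := @sumR_ge_term n (fun i => \big[Rplus/0]_(j < p) Rabs (A i j)) i.
  rewrite /mtot; apply.
  move=> k; apply sumR_ge0 => j _; apply Rabs_pos.
Qed.

Lemma Rsup_lub (E : R -> Prop) M t0 : (forall t, E t -> t <= M) -> E t0 -> is_lub E (Rsup E).
Proof.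
move=> HM H0; rewrite /Rsup; apply epsilon_spec.
have [s Hs] := completeness E (ex_intro _ M HM) (ex_intro _ t0 H0).
by exists s.
Qed.

Definition opset {n p} (A : mat n p) :=
  (fun t => t = 0 \/ exists x : vec p, vnorm x = 1 /\ t = vnorm (mv A x)).

Lemma opnorm_lub n p (A : mat n p) : is_lub (opset A) (opnorm A).
Proof.
apply: (Rsup_lub (M := mtot A) (t0 := 0)); last by left.
move=> t [->|[x [H1 ->]]]; first apply mtot_ge0.
apply: Rle_trans (mv_bound_tot A x) _; rewrite H1; lra.
Qed.

Lemma opnorm_ge0 n p (A : mat n p) : 0 <= opnorm A.
Proof. case: (opnorm_lub A) => H _; apply H; by left. Qed.

Lemma mv_opnorm n p (A : mat n p) x : vnorm (mv A x) <= opnorm A * vnorm x.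
Proof.
case: (Req_dec (vnorm x) 0) => Hx.
- rewrite (vnorm_eq0 Hx) mv_zero !vnorm_zero Rmult_0_r; lra.
- have [H1 H2] := vnorm_normalize Hx.
  set y := vscale (/ vnorm x) x in H1 H2.
  have -> : mv A x = vscale (vnorm x) (mv A y) by rewrite {1}H2 mv_scale.
  rewrite vnorm_scale Rabs_right; last by have := vnorm_ge0 x; lra.
  rewrite Rmult_comm; apply Rmult_le_compat_r; first apply vnorm_ge0.
  case: (opnorm_lub A) => H _; apply H; right; eexists; split; [exact H1|done].
Qed.

Lemma opnorm_le n p (A : mat n p) K : 0 <= K ->
  (forall x, vnorm (mv A x) <= K * vnorm x) -> opnorm A <= K.
Proof.
move=> K0 H; case: (opnorm_lub A) => _ H2; apply H2.
move=> t [->|[x [H1 ->]]] //.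
have := H x; rewrite H1; lra.
Qed.

Set Implicit Arguments. Unset Strict Implicit.

Section ML.
Variables (m d : nat).
Implicit Types (T : mlmap m d) (xi : nat -> vec m).

Lemma ml_ext k T xi xi' : is_multilinear k T -> (forall i, (i < k)%nat -> xi i = xi' i) -> T xi = T xi'.
Proof. by case=> H _; apply H. Qed.

Lemma vadd_scale0 n (u v : vec n) a : vadd (vscale a u) (vscale 0 v) = vscale a u.
Proof. apply functional_extensionality => i; rewrite /vadd /vscale; ring. Qed.

Lemma ml_upd_scale k T xi i a u : is_multilinear k T -> (i < k)%nat ->
  T (upd xi i (vscale a u)) = vscale a (T (upd xi i u)).
Proof.
case=> _ H Hi; have := H xi i a 0 u u Hi; rewrite !vadd_scale0; done.
Qed.

Lemma ml_upd_zero k T xi i : is_multilinear k T -> (i < k)%nat ->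
  T (upd xi i vzero) = vzero.
Proof.
move=> HT Hi; have -> : (@vzero m) = vscale 0 vzero.
  apply functional_extensionality => j; rewrite /vscale /vzero; ring.
rewrite (ml_upd_scale _ _ _ HT Hi).
apply functional_extensionality => j; rewrite /vscale /vzero; ring.
Qed.

Lemma upd_scons0 xi h u : upd (scons h xi) 0 u = scons u xi.
Proof. apply functional_extensionality => j; by case: j. Qed.

Lemma upd_same xi i : upd xi i (xi i) = xi.
Proof.
apply functional_extensionality => j; rewrite /upd.
case E: (Nat.eqb j i) => //; move/Nat.eqb_eq: E => -> //.
Qed.

Lemma slot0_lin k T xi a b u v : is_multilinear k.+1 T ->
  T (scons (vadd (vscale a u) (vscale b v)) xi) =
  vadd (vscale a (T (scons u xi))) (vscale b (T (scons v xi))).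
Proof.
case=> _ H; have := H (scons u xi) 0%nat a b u v (ltn0Sn k).
by rewrite !upd_scons0.
Qed.

Lemma slot0_scale k T xi a u : is_multilinear k.+1 T ->
  T (scons (vscale a u) xi) = vscale a (T (scons u xi)).
Proof.
move=> HT; have := slot0_lin xi a 0 u u HT; rewrite !vadd_scale0; done.
Qed.

Lemma slot0_zero k T xi : is_multilinear k.+1 T -> T (scons vzero xi) = vzero.
Proof.
move=> HT; have -> : (@vzero m) = vscale 0 vzero.
  apply functional_extensionality => j; rewrite /vscale /vzero; ring.
rewrite (slot0_scale _ _ _ HT).
apply functional_extensionality => j; rewrite /vscale /vzero; ring.
Qed.

Lemma slot0_sub k T xi u v : is_multilinear k.+1 T ->
  T (scons (vsub u v) xi) = vsub (T (scons u xi)) (T (scons v xi)).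
Proof.
move=> HT; have -> : vsub u v = vadd (vscale 1 u) (vscale (-1) v).
  apply functional_extensionality => j; rewrite /vsub /vadd /vscale; ring.
rewrite (slot0_lin _ _ _ _ _ HT).
apply functional_extensionality => j; rewrite /vsub /vadd /vscale; ring.
Qed.

Lemma slot0_add k T xi u v : is_multilinear k.+1 T ->
  T (scons (vadd u v) xi) = vadd (T (scons u xi)) (T (scons v xi)).
Proof.
move=> HT; have -> : vadd u v = vadd (vscale 1 u) (vscale 1 v).
  apply functional_extensionality => j; rewrite /vsub /vadd /vscale; ring.
rewrite (slot0_lin _ _ _ _ _ HT).
apply functional_extensionality => j; rewrite /vsub /vadd /vscale; ring.
Qed.

Lemma ml_shift k T h : is_multilinear k.+1 T -> is_multilinear k (fun eta => T (scons h eta)).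
Proof.
move=> HT; split.
- move=> xi xi' H; apply (ml_ext HT) => i; case: i => //= i Hi; apply H; done.
- move=> xi i a b u v Hi.
  have E : forall w, scons h (upd xi i w) = upd (scons h xi) i.+1 w.
    move=> w; apply functional_extensionality => j; case: j => //.
  rewrite !E; case: HT => _ H; apply H; done.
Qed.

Definition UB k T K := forall xi, (forall i, (i < k)%nat -> vnorm (xi i) <= 1) -> vnorm (T xi) <= K.

Definition sclv (j : nat) (c : R) xi : nat -> vec m :=
  fun i => if (i < j)%nat then vscale c (xi i) else xi i.

Lemma sclv_scale k T c xi j : is_multilinear k T -> (j <= k)%nat ->
  T (sclv j c xi) = vscale (c ^ j) (T xi).
Proof.
move=> HT; elim: j => [|j IH] Hj.
- have -> : sclv 0 c xi = xi by apply functional_extensionality => i.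
  apply functional_extensionality => i; rewrite /vscale /=; ring.
- have E : sclv j.+1 c xi = upd (sclv j c xi) j (vscale c (xi j)).
    apply functional_extensionality => i; rewrite /sclv /upd.
    case E: (Nat.eqb i j).
    + move/Nat.eqb_eq: E => ->; by rewrite ?ltnSn ?ltnn.
    + move/Nat.eqb_neq: E => E.
      rewrite ltnS leq_eqVlt; have -> : (i == j) = false by apply/eqP.
      done.
  rewrite E (ml_upd_scale _ _ _ HT Hj).
  have -> : upd (sclv j c xi) j (xi j) = sclv j c xi.
    apply functional_extensionality => i; rewrite /sclv /upd.
    case E2: (Nat.eqb i j) => //; move/Nat.eqb_eq: E2 => ->; by rewrite ?ltnn.
  rewrite IH; last by apply: ltnW.
  apply functional_extensionality => i; rewrite /vscale /=; ring.
Qed.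

Lemma UB_scale k T K c xi : is_multilinear k T -> UB k T K -> 0 <= c ->
  (forall i, (i < k)%nat -> vnorm (xi i) <= c) -> vnorm (T xi) <= c ^ k * K.
Proof.
move=> HT HK c0 Hxi.
case: (Req_dec c 0) => [Ec|Ec].
- subst c. case: k HT HK Hxi => [|k] HT HK Hxi.
  + rewrite /= Rmult_1_l; apply HK => i; done.
  + have E : T xi = T (sclv k.+1 0 xi).
      apply (ml_ext HT) => i Hi; rewrite /sclv Hi.
      have := Hxi i Hi; have := vnorm_ge0 (xi i) => H1 H2.
      rewrite (vnorm_eq0 (Rle_antisym _ _ H2 H1)).
      apply functional_extensionality => j; rewrite /vscale /vzero; ring.
    rewrite E (sclv_scale _ _ HT (leqnn _)) vnorm_scale pow_i; last lia.
    rewrite Rabs_R0 !Rmult_0_l; lra.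
- have cp : 0 < c by lra.
  set eta := sclv k (/ c) xi.
  have E : T xi = T (sclv k c eta).
    apply (ml_ext HT) => i Hi; rewrite /eta /sclv Hi.
    apply functional_extensionality => j; rewrite /vscale; field; lra.
  rewrite E (sclv_scale _ _ HT (leqnn _)) vnorm_scale Rabs_right; last first.
    apply Rle_ge, pow_le; lra.
  apply Rmult_le_compat_l; first by apply pow_le; lra.
  apply HK => i Hi; rewrite /eta /sclv Hi vnorm_scale Rabs_right; last first.
    apply Rle_ge; apply Rlt_le; apply Rinv_0_lt_compat; lra.
  have := Hxi i Hi => H.
  apply (Rmult_le_reg_l c) => //. rewrite -Rmult_assoc Rinv_r; lra.
Qed.

Lemma UB_slot0 k T K xi h : is_multilinear k.+1 T -> UB k.+1 T K ->
  (forall i, (i < k)%nat -> vnorm (xi i) <= 1) -> vnorm (T (scons h xi)) <= vnorm h * K.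
Proof.
move=> HT HK Hxi.
case: (Req_dec (vnorm h) 0) => Eh.
- rewrite (vnorm_eq0 Eh) (slot0_zero _ HT) !vnorm_zero; lra.
- have [H1 H2] := vnorm_normalize Eh.
  set u := vscale (/ vnorm h) h in H1 H2.
  rewrite H2 (slot0_scale _ _ _ HT) vnorm_scale Rabs_right; last by have := vnorm_ge0 h; lra.
  rewrite -H2; apply Rmult_le_compat_l; first apply vnorm_ge0.
  apply HK => i; case: i => [|i] Hi //=; first lra.
  by apply Hxi.
Qed.

Lemma UB_slot0_c k T K c xi h : is_multilinear k.+1 T -> UB k.+1 T K -> 0 <= c ->
  (forall i, (i < k)%nat -> vnorm (xi i) <= c) -> vnorm (T (scons h xi)) <= vnorm h * (c ^ k * K).
Proof.
move=> HT HK c0 Hxi.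
have := @UB_scale k (fun eta => T (scons h eta)) (vnorm h * K) c xi (ml_shift h HT).
move=> H; have := H _ c0 Hxi.
have : UB k (fun eta => T (scons h eta)) (vnorm h * K).
  move=> eta Heta; exact: (UB_slot0 h HT HK Heta).
move=> H2 /(_ H2) H3; lra.
Qed.

Definition ebasis (j : 'I_m) : vec m := fun l => if l == j then 1 else 0.

Lemma fin_choice (Q : 'I_m -> R -> Prop) :
  (forall j K K', Q j K -> K <= K' -> Q j K') ->
  (forall j, exists K, Q j K) -> exists K, 0 <= K /\ forall j, Q j K.
Proof.
move=> Hmono H.
set Kf := fun j => epsilon (inhabits 0) (Q j).
exists (\big[Rmax/0]_(j < m) Kf j); split; first by apply big_Rmax_ge0.
move=> j; apply: (Hmono j (Kf j)); first by apply epsilon_spec.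
apply: (big_Rmax_ge Kf j).
Qed.

Lemma ml_bounded k T : is_multilinear k T -> exists K, 0 <= K /\ UB k T K.
Proof.
elim: k T => [|k IH] T HT.
- exists (vnorm (T (fun _ => vzero))); split; first apply vnorm_ge0.
  move=> xi _; rewrite (ml_ext (xi' := fun _ => vzero) HT) //; lra.
- have [K [K0 HK]] : exists K, 0 <= K /\ forall j, UB k (fun eta => T (scons (ebasis j) eta)) K.
    apply fin_choice.
    + move=> j K K' H1 HKK'.
      move=> xi Hxi; have := H1 xi Hxi; lra.
    + move=> j; have [K [_ HK]] := IH _ (ml_shift (ebasis j) HT); by exists K.
  exists (INR m * K); split; first by apply Rmult_le_pos; [apply pos_INR|].
  move=> xi Hxi.
  set h := xi 0%nat; set eta := fun i => xi i.+1.
  have -> : T xi = T (scons h eta).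
    apply (ml_ext HT) => i _; by case: i.
  have Heta : forall i, (i < k)%nat -> vnorm (eta i) <= 1.
    move=> i Hi; apply Hxi; done.
  have Hh : vnorm h <= 1 by apply Hxi.
  set pv := fun n (l : 'I_m) => if (l < n)%nat then h l else 0.
  have Hpv : forall n, (n <= m)%nat -> vnorm (T (scons (pv n) eta)) <= INR n * K.
    elim => [|n IHn] Hn.
    + have -> : pv 0%nat = vzero by apply functional_extensionality => l.
      rewrite (slot0_zero _ HT) vnorm_zero /=; lra.
    + have Hnm : (n < m)%nat by [].
      set o := Ordinal Hnm.
      have -> : pv n.+1 = vadd (pv n) (vscale (h o) (ebasis o)).
        apply functional_extensionality => l; rewrite /pv /vadd /vscale /ebasis.
        case: (eqVneq l o) => [->|Hlo].
        * rewrite /= ltnSn ltnn; ring.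
        * have Hl : nat_of_ord l <> n.
            move=> E; move/eqP: Hlo; apply; apply: ord_inj; exact E.
          rewrite ltnS leq_eqVlt; have -> : (nat_of_ord l == n) = false by apply/eqP.
          rewrite /=; ring.
      rewrite (slot0_add _ _ _ HT) (slot0_scale _ _ _ HT).
      apply: Rle_trans (vnorm_add _ _) _.
      rewrite vnorm_scale S_INR.
      have := IHn (ltnW Hn).
      have := HK o eta Heta.
      have : Rabs (h o) <= 1 by apply: Rle_trans (vnorm_coord _ _) Hh.
      move=> H1 H2 H3.
      have : Rabs (h o) * vnorm (T (scons (ebasis o) eta)) <= 1 * K.
        apply Rmult_le_compat => //; [apply Rabs_pos|apply vnorm_ge0].
      lra.
  have -> : h = pv m.
    apply functional_extensionality => l; rewrite /pv ltn_ord //.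
  by apply Hpv.
Qed.

Definition mlset k T := (fun t => t = 0 \/ exists xi : nat -> vec m,
          (forall i, (i < k)%nat -> vnorm (xi i) = 1) /\ t = vnorm (T xi)).

Lemma mlnorm_lub k T : is_multilinear k T -> is_lub (mlset k T) (mlnorm k T).
Proof.
move=> HT; have [K [K0 HK]] := ml_bounded HT.
apply: (Rsup_lub (M := K) (t0 := 0)); last by left.
move=> t [->|[xi [H1 ->]]] //.
apply HK => i Hi; rewrite H1 //; lra.
Qed.

Lemma mlnorm_ge0 k T : is_multilinear k T -> 0 <= mlnorm k T.
Proof. move=> HT; case: (mlnorm_lub HT) => H _; apply H; by left. Qed.

Lemma mlnorm_ub k T xi : is_multilinear k T ->
  (forall i, (i < k)%nat -> vnorm (xi i) <= 1) -> vnorm (T xi) <= mlnorm k T.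
Proof.
move=> HT.
suff H : forall j, (j <= k)%nat -> forall xi, (forall i, (i < j)%nat -> vnorm (xi i) <= 1) ->
   (forall i, (j <= i)%nat -> (i < k)%nat -> vnorm (xi i) = 1) -> vnorm (T xi) <= mlnorm k T.
  move=> Hxi; apply (H k (leqnn k)) => // i H1 H2; exfalso.
  have := leq_trans H2 H1; by rewrite ltnn.
elim => [|j IH] Hj xi0 H1 H2.
- case: (mlnorm_lub HT) => Hub _; apply Hub; right; exists xi0; split => //.
  move=> i Hi; by apply H2.
- have Hjk : (j < k)%nat by [].
  case: (Req_dec (vnorm (xi0 j)) 0) => E.
  + have Ez := vnorm_eq0 E.
    rewrite -(upd_same xi0 j) Ez (ml_upd_zero xi0 HT Hjk) vnorm_zero.
    by apply mlnorm_ge0.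
  + have [N1 N2] := vnorm_normalize E.
    set u := vscale (/ vnorm (xi0 j)) (xi0 j) in N1 N2.
    rewrite -(upd_same xi0 j) N2 (ml_upd_scale _ _ _ HT Hjk) vnorm_scale.
    have Hle : vnorm (xi0 j) <= 1 by apply H1.
    have Hg := vnorm_ge0 (xi0 j).
    rewrite Rabs_right; last lra.
    have : vnorm (T (upd xi0 j u)) <= mlnorm k T.
      apply IH; first by apply ltnW.
      * move=> i Hi; rewrite /upd.
        case E2: (Nat.eqb i j); first by move/Nat.eqb_eq: E2 => _; rewrite N1; lra.
        apply H1; by apply ltnW.
      * move=> i Hi Hik; rewrite /upd.
        case E2: (Nat.eqb i j) => //.
        move/Nat.eqb_neq: E2 => E2; apply H2 => //.
        rewrite ltn_neqAle Hi andbT; apply/eqP => E3; apply E2; done.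
    have := mlnorm_ge0 HT. have := vnorm_ge0 (T (upd xi0 j u)).
    move=> A1 A2 A3.
    have : vnorm (xi0 j) * vnorm (T (upd xi0 j u)) <= 1 * mlnorm k T.
      apply Rmult_le_compat; lra.
    lra.
Qed.

Lemma mlnorm_le k T K : is_multilinear k T -> 0 <= K -> UB k T K -> mlnorm k T <= K.
Proof.
move=> HT K0 HK; case: (mlnorm_lub HT) => _ H; apply H.
move=> t [->|[xi [H1 ->]]] //; apply HK => i Hi; rewrite H1 //; lra.
Qed.

End ML.

Set Implicit Arguments. Unset Strict Implicit.

Lemma fin_delta (n : nat) (Q : nat -> R -> Prop) :
  (forall j dl dl', Q j dl -> 0 < dl' <= dl -> Q j dl') ->
  (forall j, (j < n)%nat -> exists dl, 0 < dl /\ Q j dl) ->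
  exists dl, 0 < dl /\ forall j, (j < n)%nat -> Q j dl.
Proof.
move=> Hm; elim: n => [|n IH] H.
- exists 1; split; first lra. done.
- have [dl1 [H1 H2]] : exists dl, 0 < dl /\ forall j, (j < n)%nat -> Q j dl.
    apply IH => j Hj; apply H; by apply: ltn_trans Hj _.
  have [dl2 [H3 H4]] := H n (ltnSn n).
  exists (Rmin dl1 dl2); split; first by apply Rmin_pos.
  move=> j; rewrite ltnS leq_eqVlt => /orP [/eqP ->|Hj].
  + apply: Hm H4 _; split; [by apply Rmin_pos|apply Rmin_r].
  + apply: Hm (H2 j Hj) _; split; [by apply Rmin_pos|apply Rmin_l].
Qed.

Lemma vnorm_bigsum n d (F : 'I_n -> vec d) :
  vnorm (fun l => \big[Rplus/0]_(j < n) F j l) <= \big[Rplus/0]_(j < n) vnorm (F j).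
Proof.
apply vnorm_le; first by apply sumR_ge0 => j _; apply vnorm_ge0.
move=> l; apply: Rle_trans (sumR_abs _ _ _) _; apply sumR_le => j _; apply vnorm_coord.
Qed.

Section Fam.
Variables (m d : nat) (rho : R) (r : nat).

Definition seg (x z : vec m) (t : R) : vec m := fun i => x i + t * (z i - x i).

Lemma inD_seg x z t : inD rho x -> inD rho z -> 0 <= t <= 1 -> inD rho (seg x z t).
Proof.
rewrite /inD => Hx Hz Ht.
have r0 : 0 <= rho by have := vnorm_ge0 x; lra.
apply vnorm_le => // i; rewrite /seg.
have -> : x i + t * (z i - x i) = (1 - t) * x i + t * z i by ring.
apply: Rle_trans (Rabs_triang _ _) _; rewrite !Rabs_mult.
rewrite (Rabs_right (1 - t)); last lra. rewrite (Rabs_right t); last lra.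
have := vnorm_coord x i; have := vnorm_coord z i => A1 A2.
have : (1 - t) * Rabs (x i) <= (1 - t) * rho by apply Rmult_le_compat_l; lra.
have : t * Rabs (z i) <= t * rho by apply Rmult_le_compat_l; lra.
lra.
Qed.

Lemma mapA_scons (A : mat m m) h (xi : nat -> vec m) :
  (fun i => mv A (scons h xi i)) = scons (mv A h) (fun i => mv A (xi i)).
Proof. apply functional_extensionality => i; by case: i. Qed.

Lemma mapA_upd (A : mat m m) (xi : nat -> vec m) i w :
  (fun j => mv A (upd xi i w j)) = upd (fun j => mv A (xi j)) i (mv A w).
Proof. apply functional_extensionality => j; rewrite /upd; by case: (Nat.eqb j i). Qed.

Lemma Cr_comp (P : vec m -> vec d) DP (G : mat d d) (A : mat m m) :
  Cr_family rho r P DP -> (forall x, vnorm (mv A x) <= vnorm x) ->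
  Cr_family rho r (fun x => mv G (P (mv A x)))
    (fun k x xi => mv G (DP k (mv A x) (fun i => mv A (xi i)))).
Proof.
move=> [C1 [C2 [C3 C4]]] HA.
have HD : forall x, inD rho x -> inD rho (mv A x).
  move=> x; rewrite /inD => H; apply: Rle_trans (HA x) H.
have Gp := opnorm_ge0 G.
split; [|split; [|split]].
- move=> x Hx xi; by rewrite C1 //; apply HD.
- move=> k x Hk Hx; have [E1 E2] := C2 k (mv A x) Hk (HD x Hx); split.
  + move=> xi xi' H; f_equal; apply E1 => i Hi; by rewrite H.
  + move=> xi i a b u v Hi; rewrite !mapA_upd mv_lin E2 // mv_lin //.
- move=> k x Hk Hx eps Heps.
  have [dl [Hdl H]] := C3 k (mv A x) Hk (HD x Hx) (eps / (opnorm G + 1))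
     ltac:(apply Rdiv_lt_0_compat; lra).
  exists dl; split => // y Hy Hyx xi Hxi.
  have E : mv A (vsub y x) = vsub (mv A y) (mv A x) by rewrite mv_sub.
  rewrite mapA_scons -!mv_sub E.
  apply: Rle_trans (mv_opnorm _ _) _.
  have Hyx' : vnorm (vsub (mv A y) (mv A x)) <= vnorm (vsub y x) by rewrite -E.
  have := H (mv A y) (HD y Hy) ltac:(lra) (fun i => mv A (xi i))
     ltac:(move=> i Hi; apply: Rle_trans (HA _) _; by apply Hxi).
  set R1 := vnorm _ => HR.
  have e1 : eps / (opnorm G + 1) * vnorm (vsub (mv A y) (mv A x)) <= eps / (opnorm G + 1) * vnorm (vsub y x).
    apply Rmult_le_compat_l => //; apply Rlt_le, Rdiv_lt_0_compat; lra.
  have e2 : opnorm G * (eps / (opnorm G + 1)) <= eps.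
    apply (Rmult_le_reg_r (opnorm G + 1)); first lra.
    field_simplify; lra.
  have Hn := vnorm_ge0 (vsub y x).
  have : opnorm G * R1 <= opnorm G * (eps / (opnorm G + 1) * vnorm (vsub y x)).
    apply Rmult_le_compat_l; lra.
  have : opnorm G * (eps / (opnorm G + 1) * vnorm (vsub y x)) <= eps * vnorm (vsub y x).
    rewrite -Rmult_assoc; apply Rmult_le_compat_r; lra.
  lra.
- move=> x Hx eps Heps.
  have [dl [Hdl H]] := C4 (mv A x) (HD x Hx) (eps / (opnorm G + 1))
     ltac:(apply Rdiv_lt_0_compat; lra).
  exists dl; split => // y Hy Hyx xi Hxi.
  rewrite -mv_sub; apply: Rle_trans (mv_opnorm _ _) _.
  have Hyx' : vnorm (vsub (mv A y) (mv A x)) < dl.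
    rewrite -mv_sub; apply: Rle_lt_trans (HA _) Hyx.
  have := H (mv A y) (HD y Hy) Hyx' (fun i => mv A (xi i))
     ltac:(move=> i Hi; apply: Rle_trans (HA _) _; by apply Hxi).
  set R1 := vnorm _ => HR.
  have e2 : opnorm G * (eps / (opnorm G + 1)) <= eps.
    apply (Rmult_le_reg_r (opnorm G + 1)); first lra.
    field_simplify; lra.
  have : opnorm G * R1 <= opnorm G * (eps / (opnorm G + 1)).
    apply Rmult_le_compat_l; lra.
  lra.
Qed.

Lemma sum_const n c : \big[Rplus/0]_(j < n) c = INR n * c.
Proof.
elim: n => [|n IH]; first by rewrite big_ord0 /=; ring.
rewrite big_ord_recr IH S_INR /=; ring.
Qed.

Lemma Cr_ext (P P' : vec m -> vec d) DP DP' :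
  Cr_family rho r P DP -> (forall x, inD rho x -> P' x = P x) ->
  (forall k x xi, inD rho x -> DP' k x xi = DP k x xi) -> Cr_family rho r P' DP'.
Proof.
move=> [C1 [C2 [C3 C4]]] HP HD.
split; [|split; [|split]].
- move=> x Hx xi; rewrite HD // HP //; apply C1 => //.
- move=> k x Hk Hx.
  have -> : DP' k x = DP k x by apply functional_extensionality => xi; apply HD.
  by apply C2.
- move=> k x Hk Hx eps Heps; have [dl [Hdl H]] := C3 k x Hk Hx eps Heps.
  exists dl; split => // y Hy Hyx xi Hxi; rewrite !HD //; by apply H.
- move=> x Hx eps Heps; have [dl [Hdl H]] := C4 x Hx eps Heps.
  exists dl; split => // y Hy Hyx xi Hxi; rewrite !HD //; by apply H.
Qed.

Lemma rem_sum n (F1 F2 F3 : 'I_n -> vec d) :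
  vsub (vsub (fun l => \big[Rplus/0]_(j < n) F1 j l) (fun l => \big[Rplus/0]_(j < n) F2 j l))
    (fun l => \big[Rplus/0]_(j < n) F3 j l) =
  (fun l => \big[Rplus/0]_(j < n) vsub (vsub (F1 j) (F2 j)) (F3 j) l).
Proof.
apply functional_extensionality => l; rewrite /vsub /Rminus.
rewrite -!sumR_opp -!big_split /=; apply eq_bigr => j _; ring.
Qed.

Lemma sub_sum n (F1 F2 : 'I_n -> vec d) :
  vsub (fun l => \big[Rplus/0]_(j < n) F1 j l) (fun l => \big[Rplus/0]_(j < n) F2 j l) =
  (fun l => \big[Rplus/0]_(j < n) vsub (F1 j) (F2 j) l).
Proof.
apply functional_extensionality => l; rewrite /vsub /Rminus.
rewrite -!sumR_opp -!big_split /=; apply eq_bigr => j _; ring.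
Qed.

Lemma Cr_sum n (Ps : nat -> vec m -> vec d) DPs :
  (forall j, (j < n)%nat -> Cr_family rho r (Ps j) (DPs j)) ->
  Cr_family rho r (fun x l => \big[Rplus/0]_(j < n) Ps j x l)
    (fun k x xi l => \big[Rplus/0]_(j < n) DPs j k x xi l).
Proof.
move=> HC.
have en : 0 < INR n + 1 by have := pos_INR n; lra.
split; [|split; [|split]].
- move=> x Hx xi; apply functional_extensionality => l; apply eq_bigr => j _.
  case: (HC j (ltn_ord j)) => C1 _; by rewrite C1.
- move=> k x Hk Hx; split.
  + move=> xi xi' H; apply functional_extensionality => l; apply eq_bigr => j _.
    case: (HC j (ltn_ord j)) => _ [C2 _]; by rewrite (ml_ext (C2 k x Hk Hx) H).
  + move=> xi i a b u v Hi; apply functional_extensionality => l.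
    rewrite /vadd /vscale !big_distrr -big_split /=; apply eq_bigr => j _.
    case: (HC j (ltn_ord j)) => _ [C2 _]; case: (C2 k x Hk Hx) => _ E.
    by rewrite E.
- move=> k x Hk Hx eps Heps.
  have [dl [Hdl H]] := fin_delta (n := n) (Q := fun j dl => forall y, inD rho y ->
     vnorm (vsub y x) < dl -> forall xi : nat -> vec m,
     (forall i, (i < k)%nat -> vnorm (xi i) <= 1) ->
     vnorm (vsub (vsub (DPs j k y xi) (DPs j k x xi)) (DPs j k.+1 x (scons (vsub y x) xi)))
       <= eps / (INR n + 1) * vnorm (vsub y x))
    ltac:(move=> j dl dl' H1 H2 y Hy Hyx; apply H1 => //; lra)
    ltac:(move=> j Hj; case: (HC j Hj) => _ [_ [C3 _]]; apply C3 => //;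
          apply Rdiv_lt_0_compat; lra).
  exists dl; split => // y Hy Hyx xi Hxi.
  cbv beta; rewrite rem_sum.
  eapply Rle_trans; first exact: (vnorm_bigsum (fun j : 'I_n => vsub (vsub (DPs j k y xi) (DPs j k x xi)) (DPs j k.+1 x (scons (vsub y x) xi)))).
  eapply Rle_trans.
    apply: (@sumR_le _ _ _ _ (fun _ : 'I_n => eps / (INR n + 1) * vnorm (vsub y x))).
    move=> j _; apply H => //.
  rewrite sum_const.
  have Hn := vnorm_ge0 (vsub y x).
  have : INR n * (eps / (INR n + 1)) <= eps.
    apply (Rmult_le_reg_r (INR n + 1)) => //. field_simplify; lra.
  move=> H1; rewrite -Rmult_assoc; apply Rmult_le_compat_r => //.
- move=> x Hx eps Heps.
  have [dl [Hdl H]] := fin_delta (n := n) (Q := fun j dl => forall y, inD rho y ->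
     vnorm (vsub y x) < dl -> forall xi : nat -> vec m,
     (forall i, (i < r)%nat -> vnorm (xi i) <= 1) ->
     vnorm (vsub (DPs j r y xi) (DPs j r x xi)) <= eps / (INR n + 1))
    ltac:(move=> j dl dl' H1 H2 y Hy Hyx; apply H1 => //; lra)
    ltac:(move=> j Hj; case: (HC j Hj) => _ [_ [_ C4]]; apply C4 => //;
          apply Rdiv_lt_0_compat; lra).
  exists dl; split => // y Hy Hyx xi Hxi.
  cbv beta; rewrite sub_sum.
  eapply Rle_trans; first exact: (vnorm_bigsum (fun j : 'I_n => vsub (DPs j r y xi) (DPs j r x xi))).
  eapply Rle_trans.
    apply: (@sumR_le _ _ _ _ (fun _ : 'I_n => eps / (INR n + 1))).
    move=> j _; apply H => //.
  rewrite sum_const.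
  apply (Rmult_le_reg_r (INR n + 1)) => //. field_simplify; lra.
Qed.

End Fam.

Set Implicit Arguments. Unset Strict Implicit.

Lemma le_eps a c : 0 <= a -> 0 <= c -> (forall e, 0 < e -> a <= e * c) -> a = 0.
Proof.
move=> a0 c0 H; apply Rle_antisym => //.
apply Rnot_lt_le => Ha.
have := H (a / (2 * (c + 1))) ltac:(apply Rdiv_lt_0_compat; lra).
move=> H2.
have : a / (2 * (c + 1)) * c < a.
  apply (Rmult_lt_reg_r (2 * (c + 1))); first lra.
  field_simplify; try lra. nra.
lra.
Qed.

Section Uniq.
Variables (m d : nat) (rho : R) (r : nat).

Lemma shift_scons (xi : nat -> vec m) : scons (xi 0%nat) (fun i => xi i.+1) = xi.
Proof. apply functional_extensionality => i; by case: i. Qed.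

Lemma seg_sub (x z : vec m) t : vsub (seg x z t) x = vscale t (vsub z x).
Proof. apply functional_extensionality => i; rewrite /seg /vsub /vscale; ring. Qed.

Lemma Cr_unique (P : vec m -> vec d) DP DP' : 0 < rho ->
  Cr_family rho r P DP -> Cr_family rho r P DP' ->
  forall k, (k <= r)%nat -> forall x, inD rho x -> forall xi : nat -> vec m,
  (forall i, (i < k)%nat -> vnorm (xi i) <= 1) -> DP k x xi = DP' k x xi.
Proof.
move=> rho0 [C1 [C2 [C3 C4]]] [D1 [D2 [D3 D4]]].
elim=> [|k IH] Hk x Hx xi Hxi; first by rewrite C1 // D1.
have Hkr : (k < r)%nat by [].
have M1 := C2 k.+1 x Hk Hx; have M2 := D2 k.+1 x Hk Hx.
set eta := fun i => xi i.+1.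
have Heta : forall i, (i < k)%nat -> vnorm (eta i) <= 1 by move=> i Hi; apply Hxi.
set L := fun w => vsub (DP k.+1 x (scons w eta)) (DP' k.+1 x (scons w eta)).
have Lsub : forall u v, L (vsub u v) = vsub (L u) (L v).
  move=> u v; rewrite /L (slot0_sub _ _ _ M1) (slot0_sub _ _ _ M2).
  apply functional_extensionality => l; rewrite /vsub; ring.
have Lscale : forall a u, L (vscale a u) = vscale a (L u).
  move=> a u; rewrite /L (slot0_scale _ _ _ M1) (slot0_scale _ _ _ M2).
  apply functional_extensionality => l; rewrite /vsub /vscale; ring.
have Lzero : L vzero = vzero.
  rewrite /L (slot0_zero _ M1) (slot0_zero _ M2).
  apply functional_extensionality => l; rewrite /vsub /vzero; ring.
have Cl1 : forall z, inD rho z -> L (vsub z x) = vzero.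
  move=> z Hz.
  case: (Req_dec (vnorm (vsub z x)) 0) => Ezx.
    by rewrite (vnorm_eq0 Ezx).
  have Hzx := vnorm_ge0 (vsub z x).
  apply vnorm_eq0; apply: (le_eps (c := 2 * vnorm (vsub z x))).
  - apply vnorm_ge0.
  - lra.
  - move=> e He.
    have [d1 [Hd1 H1]] := C3 k x Hkr Hx e He.
    have [d2 [Hd2 H2]] := D3 k x Hkr Hx e He.
    set dl := Rmin d1 d2.
    have Hdl : 0 < dl by apply Rmin_pos.
    set t := Rmin 1 (dl / (2 * vnorm (vsub z x))).
    have Ht0 : 0 < t.
      apply Rmin_pos; first lra. apply Rdiv_lt_0_compat; lra.
    have Ht1 : t <= 1 by apply Rmin_l.
    have Htd : t * vnorm (vsub z x) < dl.
      have : t <= dl / (2 * vnorm (vsub z x)) by apply Rmin_r.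
      move=> H; have : t * vnorm (vsub z x) <= dl / (2 * vnorm (vsub z x)) * vnorm (vsub z x).
        apply Rmult_le_compat_r; lra.
      have -> : dl / (2 * vnorm (vsub z x)) * vnorm (vsub z x) = dl / 2 by field.
      lra.
    set y := seg x z t.
    have Hy : inD rho y by apply inD_seg => //; lra.
    have Eyx : vnorm (vsub y x) = t * vnorm (vsub z x).
      rewrite /y seg_sub vnorm_scale Rabs_right; lra.
    have Hy1 : vnorm (vsub y x) < d1.
      have := Rmin_l d1 d2; rewrite -/dl; lra.
    have Hy2 : vnorm (vsub y x) < d2.
      have := Rmin_r d1 d2; rewrite -/dl; lra.
    have R1 := H1 y Hy Hy1 eta Heta.
    have R2 := H2 y Hy Hy2 eta Heta.
    have E1 : DP k y eta = DP' k y eta by apply IH => //; apply ltnW.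
    have E2 : DP k x eta = DP' k x eta by apply IH => //; apply ltnW.
    have EL : L (vsub y x) = vsub (vsub (vsub (DP' k y eta) (DP' k x eta)) (DP' k.+1 x (scons (vsub y x) eta)))
                                  (vsub (vsub (DP k y eta) (DP k x eta)) (DP k.+1 x (scons (vsub y x) eta))).
      rewrite /L E1 E2; apply functional_extensionality => l; rewrite /vsub; ring.
    have : vnorm (L (vsub y x)) <= 2 * e * vnorm (vsub y x).
      rewrite EL; apply: Rle_trans (vnorm_sub _ _) _; lra.
    rewrite /y seg_sub Lscale vnorm_scale Rabs_right; last lra.
    move=> H.
    have : t * vnorm (L (vsub z x)) <= t * (e * (2 * vnorm (vsub z x))).
      have -> : t * (e * (2 * vnorm (vsub z x))) = 2 * e * (t * vnorm (vsub z x)) by ring.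
      by rewrite vnorm_scale Rabs_right in H; lra.
    move=> H3; apply (Rmult_le_reg_l t) => //.
have Cl2 : forall w, L w = vzero.
  move=> w.
  have Hw := vnorm_ge0 w.
  set s := rho / (vnorm w + 1).
  have Hs : 0 < s by apply Rdiv_lt_0_compat; lra.
  have Hsw : s * vnorm w <= rho.
    have -> : s * vnorm w = rho - s by rewrite /s; field; lra.
    lra.
  have Hz : inD rho (vscale (s / 2) w).
    rewrite /inD vnorm_scale Rabs_right; lra.
  have Hz' : inD rho (vscale (- (s / 2)) w).
    rewrite /inD vnorm_scale Rabs_left; lra.
  have := Cl1 _ Hz; have := Cl1 _ Hz' => E1 E2.
  have : L (vsub (vsub (vscale (s / 2) w) x) (vsub (vscale (- (s / 2)) w) x)) = vzero.
    rewrite Lsub E1 E2; apply functional_extensionality => l; rewrite /vsub /vzero; ring.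
  have -> : vsub (vsub (vscale (s / 2) w) x) (vsub (vscale (- (s / 2)) w) x) = vscale s w.
    apply functional_extensionality => l; rewrite /vsub /vscale; field.
  rewrite Lscale => E3.
  apply functional_extensionality => l.
  have : vscale s (L w) l = 0 by rewrite E3.
  rewrite /vscale /vzero => H.
  have [H4|H4] := Rmult_integral _ _ H; [lra|done].
rewrite -(shift_scons xi).
have := Cl2 (xi 0%nat); rewrite /L -/eta => E.
apply functional_extensionality => l.
have : vsub (DP k.+1 x (scons (xi 0%nat) eta)) (DP' k.+1 x (scons (xi 0%nat) eta)) l = 0 by rewrite E.
rewrite /vsub; lra.
Qed.

End Uniq.

Set Implicit Arguments. Unset Strict Implicit.

Lemma cont_pt_of (g : R -> R) t :
  (forall eps, 0 < eps -> exists dl, 0 < dl /\ forall s, Rabs (s - t) < dl -> Rabs (g s - g t) < eps) ->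
  continuity_pt g t.
Proof.
move=> H eps Heps; have [dl [Hdl H2]] := H eps Heps.
exists dl; split => // x [_ Hx]; apply H2; done.
Qed.

Definition clamp (t : R) := Rmax 0 (Rmin 1 t).

Lemma clamp_in t : 0 <= clamp t <= 1.
Proof.
rewrite /clamp; split; first apply Rmax_l.
apply Rmax_lub; first lra. apply Rmin_l.
Qed.

Lemma clamp_id t : 0 <= t <= 1 -> clamp t = t.
Proof. move=> Ht; rewrite /clamp Rmin_right; last lra. rewrite Rmax_right; lra. Qed.

Lemma clamp_lip s t : 0 <= t <= 1 -> Rabs (clamp s - t) <= Rabs (s - t).
Proof.
move=> Ht; rewrite /clamp.
case: (Rle_dec s 0) => H1.
- rewrite Rmin_right; last lra. rewrite Rmax_left //.
  rewrite !Rabs_left1; lra.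
- case: (Rle_dec s 1) => H2.
  + rewrite Rmin_right // Rmax_right; lra.
  + rewrite Rmin_left; last lra. rewrite Rmax_right; last lra.
    rewrite !Rabs_right; lra.
Qed.

Section MVT.
Variables (m d : nat) (rho : R) (r : nat).

Lemma seg_sub2 (v u : vec m) s t : vsub (seg v u s) (seg v u t) = vscale (s - t) (vsub u v).
Proof. apply functional_extensionality => i; rewrite /seg /vsub /vscale; ring. Qed.

Lemma seg0 (v u : vec m) : seg v u 0 = v.
Proof. apply functional_extensionality => i; rewrite /seg; ring. Qed.
Lemma seg1 (v u : vec m) : seg v u 1 = u.
Proof. apply functional_extensionality => i; rewrite /seg; ring. Qed.

Lemma Cr_mvt (P : vec m -> vec d) DP k u v (xi : nat -> vec m) K :
  Cr_family rho r P DP -> (k < r)%nat -> inD rho u -> inD rho v ->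
  (forall i, (i < k)%nat -> vnorm (xi i) <= 1) ->
  (forall t, 0 <= t <= 1 -> vnorm (DP k.+1 (seg v u t) (scons (vsub u v) xi)) <= K) ->
  vnorm (vsub (DP k u xi) (DP k v xi)) <= K.
Proof.
move=> [C1 [C2 [C3 C4]]] Hk Hu Hv Hxi HK.
have K0 : 0 <= K by apply: Rle_trans (HK 0 ltac:(lra)); apply vnorm_ge0.
have HsegD : forall t, 0 <= t <= 1 -> inD rho (seg v u t).
  move=> t Ht; by apply inD_seg.
have Huv := vnorm_ge0 (vsub u v).
apply vnorm_le => // l.
set g := fun t => DP k (seg v u (clamp t)) xi l.
set df := fun t => DP k.+1 (seg v u t) (scons (vsub u v) xi) l.
have Hder : forall t, 0 < t < 1 -> is_derive g t (df t).
  move=> t Ht; apply is_derive_Reals => eps Heps.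
  have Hx := HsegD t ltac:(lra).
  have [d1 [Hd1 H1]] := C3 k _ Hk Hx (eps / (2 * (vnorm (vsub u v) + 1)))
      ltac:(apply Rdiv_lt_0_compat; lra).
  have Hdp : 0 < Rmin (d1 / (vnorm (vsub u v) + 1)) (Rmin t (1 - t)).
    apply Rmin_pos; first by apply Rdiv_lt_0_compat; lra.
    apply Rmin_pos; lra.
  exists (mkposreal _ Hdp) => h Hh0 Hh /=.
  have Hh1 : Rabs h < d1 / (vnorm (vsub u v) + 1) by apply: Rlt_le_trans Hh (Rmin_l _ _).
  have Hh2 : Rabs h < Rmin t (1 - t) by apply: Rlt_le_trans Hh (Rmin_r _ _).
  have Hh3 : Rabs h < t by apply: Rlt_le_trans Hh2 (Rmin_l _ _).
  have Hh4 : Rabs h < 1 - t by apply: Rlt_le_trans Hh2 (Rmin_r _ _).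
  have Hth : 0 <= t + h <= 1.
    move: Hh3 Hh4; case: (Rle_dec 0 h) => Hs.
    + rewrite Rabs_right; lra.
    + rewrite Rabs_left; lra.
  rewrite /g (clamp_id Hth) (clamp_id (t := t)); last lra.
  have Hy := HsegD _ Hth.
  have Eyx : vsub (seg v u (t + h)) (seg v u t) = vscale h (vsub u v).
    by rewrite seg_sub2; f_equal; ring.
  have Nyx : vnorm (vsub (seg v u (t + h)) (seg v u t)) = Rabs h * vnorm (vsub u v).
    by rewrite Eyx vnorm_scale.
  have Hyd : vnorm (vsub (seg v u (t + h)) (seg v u t)) < d1.
    rewrite Nyx.
    have : Rabs h * (vnorm (vsub u v) + 1) < d1.
      move: Hh1; move/(Rmult_lt_compat_r (vnorm (vsub u v) + 1)).
      have -> : d1 / (vnorm (vsub u v) + 1) * (vnorm (vsub u v) + 1) = d1 by field; lra.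
      apply; lra.
    have := Rabs_pos h; nra.
  have := H1 _ Hy Hyd xi Hxi.
  rewrite Eyx (slot0_scale _ _ _ (C2 k.+1 _ Hk Hx)) => Hrem.
  have Hc := vnorm_coord (vsub
          (vsub (DP k (seg v u (t + h)) xi) (DP k (seg v u t) xi))
          (vscale h (DP k.+1 (seg v u t) (scons (vsub u v) xi)))) l.
  rewrite /vsub /vscale in Hc.
  rewrite -/(df t) in Hc.
  have Hhp : 0 < Rabs h by apply Rabs_pos_lt.
  have -> : (DP k (seg v u (t + h)) xi l - DP k (seg v u t) xi l) / h - df t
       = (DP k (seg v u (t + h)) xi l - DP k (seg v u t) xi l - h * df t) / h by field.
  rewrite Rabs_div // .
  apply (Rmult_lt_reg_r (Rabs h)) => //.
  rewrite /Rdiv Rmult_assoc Rinv_l; last lra. rewrite Rmult_1_r.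
  apply: Rle_lt_trans Hc _. apply: Rle_lt_trans Hrem _.
  rewrite vnorm_scale.
  have : eps / (2 * (vnorm (vsub u v) + 1)) * vnorm (vsub u v) < eps.
    apply (Rmult_lt_reg_r (2 * (vnorm (vsub u v) + 1))); first lra.
    have -> : eps / (2 * (vnorm (vsub u v) + 1)) * vnorm (vsub u v) * (2 * (vnorm (vsub u v) + 1))
            = eps * vnorm (vsub u v) by field; lra.
    nra.
  move=> H; nra.
have Hcont : forall t, 0 <= t <= 1 -> continuity_pt g t.
  move=> t Ht; apply cont_pt_of => eps Heps.
  have Hx := HsegD t Ht.
  have [d1 [Hd1 H1]] := C3 k _ Hk Hx 1 ltac:(lra).
  have M1 := C2 k.+1 _ Hk Hx.
  have [Kx [Kx0 HKx]] := ml_bounded M1.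
  set c := (1 + Kx) * (vnorm (vsub u v) + 1).
  have Hc : 0 < c by rewrite /c; apply Rmult_lt_0_compat; lra.
  have Hdp : 0 < Rmin (d1 / (vnorm (vsub u v) + 1)) (eps / c).
    apply Rmin_pos; apply Rdiv_lt_0_compat; lra.
  exists (Rmin (d1 / (vnorm (vsub u v) + 1)) (eps / c)); split => // s Hs.
  have Hs1 : Rabs (s - t) < d1 / (vnorm (vsub u v) + 1) by apply: Rlt_le_trans Hs (Rmin_l _ _).
  have Hs2 : Rabs (s - t) < eps / c by apply: Rlt_le_trans Hs (Rmin_r _ _).
  have Hcl := clamp_lip s Ht.
  rewrite /g (clamp_id Ht).
  set s' := clamp s in Hcl *.
  have Hy : inD rho (seg v u s') := HsegD _ (clamp_in s).
  have Eyx : vsub (seg v u s') (seg v u t) = vscale (s' - t) (vsub u v) by rewrite seg_sub2.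
  have Nyx : vnorm (vsub (seg v u s') (seg v u t)) = Rabs (s' - t) * vnorm (vsub u v).
    by rewrite Eyx vnorm_scale.
  have Hb : Rabs (s' - t) * (vnorm (vsub u v) + 1) <= Rabs (s - t) * (vnorm (vsub u v) + 1).
    apply Rmult_le_compat_r; lra.
  have Hyd : vnorm (vsub (seg v u s') (seg v u t)) < d1.
    rewrite Nyx.
    have : Rabs (s - t) * (vnorm (vsub u v) + 1) < d1.
      move: Hs1; move/(Rmult_lt_compat_r (vnorm (vsub u v) + 1)).
      have -> : d1 / (vnorm (vsub u v) + 1) * (vnorm (vsub u v) + 1) = d1 by field; lra.
      apply; lra.
    have := Rabs_pos (s' - t); nra.
  have Hrem := H1 _ Hy Hyd xi Hxi.
  have Hlin := UB_slot0 (vsub (seg v u s') (seg v u t)) M1 HKx Hxi.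
  have Hc1 := vnorm_coord (vsub (DP k (seg v u s') xi) (DP k (seg v u t) xi)) l.
  rewrite /vsub in Hc1.
  have Htri : vnorm (vsub (DP k (seg v u s') xi) (DP k (seg v u t) xi)) <=
       vnorm (vsub (seg v u s') (seg v u t)) + vnorm (vsub (seg v u s') (seg v u t)) * Kx.
    have -> : vsub (DP k (seg v u s') xi) (DP k (seg v u t) xi) =
      vadd (vsub (vsub (DP k (seg v u s') xi) (DP k (seg v u t) xi))
             (DP k.+1 (seg v u t) (scons (vsub (seg v u s') (seg v u t)) xi)))
           (DP k.+1 (seg v u t) (scons (vsub (seg v u s') (seg v u t)) xi)).
      apply functional_extensionality => j; rewrite /vsub /vadd; ring.
    apply: Rle_trans (vnorm_add _ _) _.
    have : 1 * vnorm (vsub (seg v u s') (seg v u t)) = vnorm (vsub (seg v u s') (seg v u t)) by ring.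
    lra.
  apply: Rle_lt_trans Hc1 _. apply: Rle_lt_trans Htri _.
  rewrite Nyx.
  have Hpos := Rabs_pos (s' - t).
  have : Rabs (s' - t) * vnorm (vsub u v) * (1 + Kx) <= Rabs (s - t) * c.
    rewrite /c.
    have : Rabs (s' - t) * vnorm (vsub u v) <= Rabs (s - t) * (vnorm (vsub u v) + 1) by nra.
    nra.
  have : Rabs (s - t) * c < eps.
    move: Hs2; move/(Rmult_lt_compat_r c) => /(_ Hc).
    have -> : eps / c * c = eps by field; lra.
    done.
  nra.
have := MVT_gen g 0 1 df.
rewrite Rmin_left; last lra. rewrite Rmax_right; last lra.
move=> /(_ Hder Hcont) [c [Hc E]].
rewrite /g clamp_id in E; last lra. rewrite clamp_id in E; last lra.
rewrite seg0 seg1 in E.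
rewrite /vsub E Rminus_0_r Rmult_1_r /df.
apply: Rle_trans (vnorm_coord _ _) _; by apply HK.
Qed.

End MVT.

Set Implicit Arguments. Unset Strict Implicit.

Section Tay.
Variables (m d : nat) (rho : R) (r : nat).

Lemma seg_zero (z : vec m) t : seg vzero z t = vscale t z.
Proof. apply functional_extensionality => i; rewrite /seg /vzero /vscale; ring. Qed.

Lemma vsub_zero (z : vec m) : vsub z vzero = z.
Proof. apply functional_extensionality => i; rewrite /vsub /vzero; ring. Qed.

Lemma Cr_taylor (P : vec m -> vec d) DP H :
  Cr_family rho r P DP -> (forall i, (i < r)%nat -> forall xi, DP i vzero xi = vzero) ->
  0 <= H -> (forall z, inD rho z -> UB r (DP r z) H) ->
  forall j k, (k + j)%nat = r -> forall z, inD rho z -> UB k (DP k z) (H * vnorm z ^ j).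
Proof.
move=> HC H0 Hp Hr; elim=> [|j IH] k Hkj z Hz.
- rewrite addn0 in Hkj; subst k; rewrite pow_O Rmult_1_r; by apply Hr.
- have Hk : (k < r)%nat by rewrite -Hkj addnS ltnS leq_addr.
  have Hk1 : (k.+1 + j)%nat = r by rewrite addSn -addnS.
  have rho0 : 0 <= rho by have := vnorm_ge0 z; rewrite /inD in Hz; lra.
  have HzD : inD rho (@vzero m) by rewrite /inD vnorm_zero.
  move=> xi Hxi.
  have -> : DP k z xi = vsub (DP k z xi) (DP k vzero xi).
    rewrite H0 //; apply functional_extensionality => l; rewrite /vsub /vzero; ring.
  apply: (Cr_mvt HC Hk Hz HzD Hxi) => t Ht.
  case: (HC) => _ [C2 _].
  have Hs : inD rho (seg vzero z t) by apply inD_seg.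
  have M1 := C2 k.+1 _ Hk Hs.
  have := UB_slot0 (vsub z vzero) M1 (IH _ Hk1 _ Hs) Hxi.
  rewrite vsub_zero seg_zero vnorm_scale Rabs_right; last lra.
  move=> H1; apply: Rle_trans H1 _.
  have Hzn := vnorm_ge0 z.
  have : (t * vnorm z) ^ j <= vnorm z ^ j.
    apply pow_incr; split; first nra.
    have : t * vnorm z <= 1 * vnorm z by apply Rmult_le_compat_r; lra.
    lra.
  move=> H2; rewrite /= .
  have : 0 <= (t * vnorm z) ^ j by apply pow_le; nra.
  move=> H3.
  have : vnorm z * (H * (t * vnorm z) ^ j) <= vnorm z * (H * vnorm z ^ j).
    apply Rmult_le_compat_l => //; apply Rmult_le_compat_l => //.
  lra.
Qed.

Lemma Cr_rem (P : vec m -> vec d) DP k u v (xi : nat -> vec m) K :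
  Cr_family rho r P DP -> (k < r)%nat -> inD rho u -> inD rho v ->
  (forall i, (i < k)%nat -> vnorm (xi i) <= 1) ->
  (forall t, 0 <= t <= 1 -> vnorm (DP k.+1 (seg v u t) (scons (vsub u v) xi)) <= K) ->
  vnorm (vsub (vsub (DP k u xi) (DP k v xi)) (DP k.+1 v (scons (vsub u v) xi))) <= 2 * K.
Proof.
move=> HC Hk Hu Hv Hxi HK.
apply: Rle_trans (vnorm_sub _ _) _.
have := Cr_mvt HC Hk Hu Hv Hxi HK.
have := HK 0 ltac:(lra); rewrite seg0; lra.
Qed.

Lemma compact_1d (a b : R) (Z : R -> R -> R -> Prop) : a <= b ->
  (forall dl dl' M M' s, Z dl M s -> 0 < dl' <= dl -> M <= M' -> Z dl' M' s) ->
  (forall t, a <= t <= b -> exists dl, 0 < dl /\ exists M, forall s, Rabs (s - t) < dl -> Z dl M s) ->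
  exists dl, 0 < dl /\ exists M, forall s, a <= s <= b -> Z dl M s.
Proof.
move=> Hab Hmono Hloc.
set E := fun c => a <= c <= b /\ exists dl, 0 < dl /\ exists M, forall s, a <= s <= c -> Z dl M s.
have Ea : E a.
  split; first lra.
  have [dl [Hdl [M HM]]] := Hloc a ltac:(lra).
  exists dl; split => //; exists M => s Hs; apply HM.
  have -> : s - a = 0 by lra. rewrite Rabs_R0; lra.
have [cs [Hub Hlub]] : {c | is_lub E c}.
  apply completeness; last by exists a.
  exists b => c [Hc _]; lra.
have Hcs1 : a <= cs by apply Hub.
have Hcs2 : cs <= b by apply Hlub => c [Hc _]; lra.
have [ds [Hds [Ms HMs]]] := Hloc cs ltac:(lra).
have [c [Ec Hc]] : exists c, E c /\ cs - ds / 2 < c.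
  apply NNPP => Hn.
  have : cs <= cs - ds / 2.
    apply Hlub => c Ec; apply Rnot_lt_le => Hlt; apply Hn; by exists c.
  lra.
case: Ec => [Hc1 [dc [Hdc [Mc HMc]]]].
set c1 := Rmin b (cs + ds / 2).
have Ec1 : E c1.
  split.
  - split; [apply Rmin_glb; lra | apply Rmin_l].
  - exists (Rmin dc ds); split; first by apply Rmin_pos.
    exists (Rmax Mc Ms) => s Hs.
    case: (Rle_dec s c) => Hsc.
    + apply: Hmono (HMc s ltac:(lra)) _ _.
      * split; [by apply Rmin_pos|apply Rmin_l].
      * apply Rmax_l.
    + have Hcc : c <= cs by apply Hub; split => //; exists dc; split => //; by exists Mc.
      have : s <= cs + ds / 2 by have := Rmin_r b (cs + ds / 2); rewrite -/c1; lra.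
      move=> Hs2.
      apply: Hmono (HMs s _) _ _.
      * apply Rabs_def1; lra.
      * split; [by apply Rmin_pos|apply Rmin_r].
      * apply Rmax_r.
have Hc1le : c1 <= cs by apply Hub.
have Hc1b : c1 = b.
  rewrite /c1 in Hc1le *. case: (Rle_dec b (cs + ds / 2)) => H4.
  - by rewrite Rmin_left.
  - rewrite Rmin_right in Hc1le; lra.
rewrite Hc1b in Ec1. case: Ec1 => _ [dl [Hdl [M HM]]].
exists dl; split => //; exists M => s Hs; by apply HM.
Qed.

Definition xupd (x : vec m) (i : 'I_m) (t : R) : vec m := fun j => if j == i then t else x j.

Lemma box_compact (Q : vec m -> R -> Prop) : 0 <= rho ->
  (forall y M M', Q y M -> M <= M' -> Q y M') ->
  (forall x, inD rho x -> exists dl, 0 < dl /\ exists M, forall y, inD rho y ->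
      vnorm (vsub y x) < dl -> Q y M) ->
  exists M, forall y, inD rho y -> Q y M.
Proof.
move=> rho0 Hmono Hloc.
pose Good (S : seq 'I_m) x := exists dl, 0 < dl /\ exists M, forall y, inD rho y ->
    (forall i, i \notin S -> Rabs (y i - x i) < dl) -> Q y M.
have HG : forall S x, inD rho x -> Good S x.
  elim=> [|i S IH] x Hx.
  - have [dl [Hdl [M HM]]] := Hloc x Hx.
    exists dl; split => //; exists M => y Hy Hyx; apply HM => //.
    apply vnorm_lt => // j; rewrite /vsub; by apply Hyx.
  - have := compact_1d (a := - rho) (b := rho)
      (Z := fun dl M s => forall y, inD rho y -> (forall j, j \notin i :: S -> Rabs (y j - x j) < dl) ->
             y i = s -> Q y M) ltac:(lra).
    case.
    + move=> dl dl' M M' s H1 H2 H3 y Hy Hyx Hyi; apply: Hmono (H1 y Hy _ Hyi) H3.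
      move=> j Hj; have := Hyx j Hj; lra.
    + move=> t Ht.
      have Hx' : inD rho (xupd x i t).
        apply vnorm_le => // j; rewrite /xupd; case: (j == i).
        * apply Rabs_le; lra.
        * apply: Rle_trans (vnorm_coord _ _) Hx.
      have [dl [Hdl [M HM]]] := IH _ Hx'.
      exists dl; split => //; exists M => s Hs y Hy Hyx Hyi; apply HM => // j Hj.
      rewrite /xupd; case: (eqVneq j i) => [E|E].
      * by rewrite E Hyi.
      * apply Hyx; by rewrite in_cons negb_or E.
    + move=> dl [Hdl [M HM]]; exists dl; split => //; exists M => y Hy Hyx.
      apply: (HM (y i)) => //.
      have := vnorm_coord y i; rewrite /inD in Hy.
      move=> H; have H2 := Rle_trans _ _ _ H Hy.
      have := Rle_abs (y i); have := Rle_abs (- y i); rewrite Rabs_Ropp; lra.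
have H0 : inD rho (@vzero m) by rewrite /inD vnorm_zero.
have [dl [Hdl [M HM]]] := HG (enum 'I_m) _ H0.
exists M => y Hy; apply HM => // i; by rewrite mem_enum.
Qed.

Lemma Cr_bounded (P : vec m -> vec d) DP : 0 <= rho -> Cr_family rho r P DP ->
  exists H, 0 <= H /\ forall z, inD rho z -> UB r (DP r z) H.
Proof.
move=> rho0 [C1 [C2 [C3 C4]]].
have := box_compact (Q := fun y M => 0 <= M /\ UB r (DP r y) M) rho0.
case.
- move=> y M M' [H1 H2] H3; split; first lra.
  move=> xi Hxi; have := H2 xi Hxi; lra.
- move=> x Hx.
  have [dl [Hdl H]] := C4 x Hx 1 ltac:(lra).
  have [Kx [Kx0 HKx]] := ml_bounded (C2 r x (leqnn r) Hx).
  exists dl; split => //; exists (Kx + 1) => y Hy Hyx; split; first lra.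
  move=> xi Hxi; have := H y Hy Hyx xi Hxi; have := HKx xi Hxi.
  have := vnorm_add (vsub (DP r y xi) (DP r x xi)) (DP r x xi).
  have -> : vadd (vsub (DP r y xi) (DP r x xi)) (DP r x xi) = DP r y xi.
    apply functional_extensionality => l; rewrite /vadd /vsub; ring.
  lra.
- move=> M HM; exists M; split.
  + have H0 : inD rho (@vzero m) by rewrite /inD vnorm_zero.
    by case: (HM _ H0).
  + move=> z Hz; by case: (HM z Hz).
Qed.

End Tay.

Set Implicit Arguments. Unset Strict Implicit.

Lemma ex_series_cmp (a b : nat -> R) : (forall n, Rabs (a n) <= b n) -> ex_series b -> ex_series a.
Proof. move=> H Hb; apply: (ex_series_le a b) => //. Qed.

Lemma Series_abs_le (a b : nat -> R) : (forall n, Rabs (a n) <= b n) -> ex_series b ->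
  Rabs (Series a) <= Series b.
Proof.
move=> H Hb.
have Ha : ex_series (fun n => Rabs (a n)).
  apply: (ex_series_cmp (b := b)) => // n; rewrite Rabs_Rabsolu; apply H.
apply: Rle_trans (Series_Rabs _ Ha) _.
apply Series_le => // n; split; [apply Rabs_pos | apply H].
Qed.

Lemma Series_split (a : nat -> R) n : ex_series a ->
  Series a = \big[Rplus/0]_(i < n) a i + Series (fun k => a (n + k)%nat).
Proof.
move=> Ha; elim: n => [|n IH].
- rewrite big_ord0 Rplus_0_l; apply Series_ext => k; done.
- rewrite IH big_ord_recr /=.
  have Hs : ex_series (fun k => a (n + k)%nat).
    have := proj1 (ex_series_incr_n a n) Ha.
    apply: ex_series_ext => k; done.
  rewrite (Series_incr_1 _ Hs).
  have -> : Series (fun k => a (n + k.+1)%nat) = Series (fun k => a (n.+1 + k)%nat).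
    apply Series_ext => k; by rewrite addnS addSn.
  rewrite addn0; ring.
Qed.

Lemma ex_series_shift (a : nat -> R) n : ex_series a -> ex_series (fun k => a (n + k)%nat).
Proof.
move=> Ha; have := proj1 (ex_series_incr_n a n) Ha.
apply: ex_series_ext => k; done.
Qed.

Lemma sum_n_big (a : nat -> R) n : sum_n a n = \big[Rplus/0]_(i < n.+1) a i.
Proof.
elim: n => [|n IH].
- by rewrite sum_O big_ord_recr big_ord0 /= Rplus_0_l.
- rewrite sum_Sn IH (big_ord_recr n.+1) /=; reflexivity.
Qed.

Lemma tail_small (a : nat -> R) e : ex_series a -> 0 < e ->
  exists S, Rabs (Series (fun k => a (S + k)%nat)) < e.
Proof.
move=> Ha He.
have H := Series_correct _ Ha.
have H2 : is_lim_seq (sum_n a) (Series a) by exact H.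
have := proj2 (is_lim_seq_spec _ _) H2 (mkposreal _ He).
case=> N HN; exists N.+1.
have := HN N (le_n N) => /=.
rewrite sum_n_big.
have := Series_split N.+1 Ha.
move=> E1 E2.
have -> : Series (fun k => a (N.+1 + k)%nat) = Series a - \big[Rplus/0]_(i < N.+1) a i by lra.
rewrite Rabs_minus_sym; done.
Qed.

Lemma ex_series_bounded (a : nat -> R) M : (forall n, 0 <= a n) ->
  (forall n, \big[Rplus/0]_(i < n.+1) a i <= M) -> ex_series a.
Proof.
move=> Hp HM.
have [l Hl] : ex_finite_lim_seq (sum_n a).
  apply: (ex_finite_lim_seq_incr _ M).
  - move=> n; rewrite sum_Sn; have := Hp n.+1; rewrite /plus /=; lra.
  - move=> n; rewrite sum_n_big; apply HM.
by exists l.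
Qed.

Section VS.
Variable d : nat.

Definition VS (f : nat -> vec d) : vec d := fun l => Series (fun s => f s l).

Lemma VS_ex (f : nat -> vec d) b : (forall s, vnorm (f s) <= b s) -> ex_series b ->
  forall l, ex_series (fun s => f s l).
Proof.
move=> H Hb l; apply: (ex_series_cmp (b := b)) => // s.
apply: Rle_trans (vnorm_coord _ _) (H s).
Qed.

Lemma Series_ge0 (b : nat -> R) : (forall n, 0 <= b n) -> ex_series b -> 0 <= Series b.
Proof.
move=> H Hb.
have E : Series (fun n => 0 * b n) = 0 by rewrite Series_scal_l; ring.
rewrite -E; apply Series_le => // n; split; [lra|]. rewrite Rmult_0_l; apply H.
Qed.

Lemma VS_bound (f : nat -> vec d) b : (forall s, vnorm (f s) <= b s) -> ex_series b ->
  vnorm (VS f) <= Series b.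
Proof.
move=> H Hb; apply vnorm_le.
- apply Series_ge0 => // n; apply: Rle_trans (H n); apply vnorm_ge0.
- move=> l; apply Series_abs_le => // s; apply: Rle_trans (vnorm_coord _ _) (H s).
Qed.

Lemma VS_lin (f g : nat -> vec d) a b :
  (forall l, ex_series (fun s => f s l)) -> (forall l, ex_series (fun s => g s l)) ->
  VS (fun s => vadd (vscale a (f s)) (vscale b (g s))) = vadd (vscale a (VS f)) (vscale b (VS g)).
Proof.
move=> Hf Hg; apply functional_extensionality => l; rewrite /VS /vadd /vscale.
rewrite -!Series_scal_l Series_plus //.
- by apply: ex_series_scal_l.
- by apply: ex_series_scal_l.
Qed.

Lemma VS_sub (f g : nat -> vec d) :
  (forall l, ex_series (fun s => f s l)) -> (forall l, ex_series (fun s => g s l)) ->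
  VS (fun s => vsub (f s) (g s)) = vsub (VS f) (VS g).
Proof.
move=> Hf Hg; apply functional_extensionality => l; rewrite /VS /vsub.
by rewrite Series_minus.
Qed.

Lemma VS_ext (f g : nat -> vec d) : (forall s, f s = g s) -> VS f = VS g.
Proof. move=> H; apply functional_extensionality => l; apply Series_ext => s; by rewrite H. Qed.

Lemma VS_split (f : nat -> vec d) S :
  (forall l, ex_series (fun s => f s l)) ->
  vsub (VS f) (fun l => \big[Rplus/0]_(s < S) f s l) = VS (fun k => f (S + k)%nat).
Proof.
move=> Hf; apply functional_extensionality => l; rewrite /VS /vsub.
rewrite (Series_split S (Hf l)); ring.
Qed.

Lemma ex_series_lin (a b : nat -> R) x y : ex_series a -> ex_series b ->
  ex_series (fun n => x * a n + y * b n).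
Proof.
move=> Ha Hb; apply: (ex_series_plus (fun n => x * a n) (fun n => y * b n)).
- by apply: ex_series_scal_l.
- by apply: ex_series_scal_l.
Qed.

End VS.

Lemma ex_series_zero : ex_series (fun _ : nat => 0).
Proof.
apply: (ex_series_bounded (M := 0)) => n /=; first lra.
rewrite big1 //; lra.
Qed.

Lemma ex_series_delta c : ex_series (fun n => if n == 0%nat then c else 0).
Proof.
apply (proj2 (ex_series_incr_1 _)); apply: ex_series_ext ex_series_zero => n; done.
Qed.

Lemma Series_delta c : Series (fun n => if n == 0%nat then c else 0) = c.
Proof.
rewrite Series_incr_1; last apply ex_series_delta.
have -> : Series (fun k => if k.+1 == 0%nat then c else 0) = Series (fun k => 0 * 0).
  apply Series_ext => k; simpl; ring.
rewrite Series_scal_l /=; ring.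
Qed.

Lemma ex_series_shiftj (g : nat -> R) j : ex_series g ->
  ex_series (fun n => if (j <= n)%nat then g (n - j)%nat else 0).
Proof.
move=> Hg; apply (proj2 (ex_series_incr_n _ j)).
apply: ex_series_ext Hg => n.
have -> : (j <= (j + n)%coq_nat)%nat by change (Nat.add j n) with (addn j n); apply leq_addr.
change (Nat.add j n) with (addn j n); by rewrite addKn.
Qed.

Lemma Series_shiftj (g : nat -> R) j : ex_series g ->
  Series (fun n => if (j <= n)%nat then g (n - j)%nat else 0) = Series g.
Proof.
move=> Hg; rewrite (Series_split j (ex_series_shiftj j Hg)).
rewrite big1; last first.
  move=> i _; have -> : (j <= i)%nat = false by apply/negbTE; rewrite -ltnNge ltn_ord.
  done.
rewrite Rplus_0_l; apply Series_ext => k.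
by rewrite leq_addr addKn.
Qed.

Lemma Series_bigsum n (F : 'I_n -> nat -> R) : (forall j, ex_series (F j)) ->
  ex_series (fun s => \big[Rplus/0]_(j < n) F j s) /\
  Series (fun s => \big[Rplus/0]_(j < n) F j s) = \big[Rplus/0]_(j < n) Series (F j).
Proof.
elim: n F => [|n IH] F HF.
- split.
  + apply: ex_series_ext ex_series_zero => s; by rewrite big_ord0.
  + rewrite big_ord0; have -> : Series (fun s => \big[Rplus/0]_(j < 0) F j s) = Series (fun s => 0 * 0).
      apply Series_ext => s; rewrite big_ord0; ring.
    rewrite Series_scal_l; ring.
- have [E1 E2] := IH (fun j => F (widen_ord (leqnSn n) j)) (fun j => HF _).
  have E3 : forall s, \big[Rplus/0]_(j < n.+1) F j s =
      \big[Rplus/0]_(j < n) F (widen_ord (leqnSn n) j) s + F ord_max s.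
    move=> s; by rewrite big_ord_recr.
  split.
  + apply: ex_series_ext (ex_series_plus _ _ E1 (HF ord_max)) => s; by rewrite E3.
  + rewrite (Series_ext _ _ E3) Series_plus // E2 big_ord_recr //.
Qed.

Lemma mv_VS n p (A : mat n p) (f : nat -> vec p) : (forall k, ex_series (fun s => f s k)) ->
  mv A (VS f) = VS (fun s => mv A (f s)).
Proof.
move=> Hf; apply functional_extensionality => i; rewrite /mv /VS.
have H : forall k : 'I_p, ex_series (fun s => A i k * f s k).
  move=> k; by apply: ex_series_scal_l.
rewrite (proj2 (Series_bigsum H)); apply eq_bigr => k _.
by rewrite Series_scal_l.
Qed.

Set Implicit Arguments. Unset Strict Implicit.

Lemma ex_series_sub (a b : nat -> R) : ex_series a -> ex_series b -> ex_series (fun n => a n - b n).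
Proof.
move=> Ha Hb; have H := ex_series_lin 1 (-1) Ha Hb.
apply: (ex_series_ext _ _ _ H) => n /=; lra.
Qed.

Definition cmax m (k : nat) (xi : nat -> vec m) : R := \big[Rmax/0]_(i < k) vnorm (xi i).

Lemma cmax_ge0 m k (xi : nat -> vec m) : 0 <= cmax k xi.
Proof. apply big_Rmax_ge0. Qed.

Lemma cmax_ge m k (xi : nat -> vec m) i : (i < k)%nat -> vnorm (xi i) <= cmax k xi.
Proof. move=> Hi; exact: (big_Rmax_ge (fun i : 'I_k => vnorm (xi i)) (Ordinal Hi)). Qed.

Section Ser.
Variables (m d : nat) (rho : R) (r : nat).

Lemma Cr_series (Qs : nat -> vec m -> vec d) (DQs : nat -> nat -> vec m -> mlmap m d) (b : nat -> R) :
  (forall s, Cr_family rho r (Qs s) (DQs s)) ->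
  (forall s, 0 <= b s) -> ex_series b ->
  (forall s k x (xi : nat -> vec m) c, (k <= r)%nat -> inD rho x -> 0 <= c ->
     (forall i, (i < k)%nat -> vnorm (xi i) <= c) -> vnorm (DQs s k x xi) <= c ^ k * b s) ->
  (forall s k x y (xi : nat -> vec m), (k < r)%nat -> inD rho x -> inD rho y ->
     (forall i, (i < k)%nat -> vnorm (xi i) <= 1) ->
     vnorm (vsub (vsub (DQs s k y xi) (DQs s k x xi)) (DQs s k.+1 x (scons (vsub y x) xi)))
       <= 2 * b s * vnorm (vsub y x)) ->
  Cr_family rho r (fun x => VS (fun s => Qs s x)) (fun k x xi => VS (fun s => DQs s k x xi)).
Proof.
move=> HC Hb0 Hb Hbd Hrem.
have Hex : forall k x (xi : nat -> vec m), (k <= r)%nat -> inD rho x ->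
    forall l, ex_series (fun s => DQs s k x xi l).
  move=> k x xi Hk Hx; apply: (VS_ex (b := fun s => cmax k xi ^ k * b s)).
  - move=> s; apply Hbd => //; [apply cmax_ge0 | move=> i Hi; by apply cmax_ge].
  - by apply: ex_series_scal_l.
split; [|split; [|split]].
- move=> x Hx xi; apply VS_ext => s; case: (HC s) => C1 _; by apply C1.
- move=> k x Hk Hx; split.
  + move=> xi xi' H; apply VS_ext => s; case: (HC s) => _ [C2 _].
    by apply (ml_ext (C2 k x Hk Hx)).
  + move=> xi i a b' u v Hi.
    have -> : (fun s => DQs s k x (upd xi i (vadd (vscale a u) (vscale b' v)))) =
              (fun s => vadd (vscale a (DQs s k x (upd xi i u))) (vscale b' (DQs s k x (upd xi i v)))).
      apply functional_extensionality => s; case: (HC s) => _ [C2 _].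
      by case: (C2 k x Hk Hx) => _ E; rewrite E.
    by apply VS_lin; apply Hex.
- move=> k x Hk Hx eps Heps.
  have Hk1 : (k.+1 <= r)%nat by [].
  have Hk0 : (k <= r)%nat by apply ltnW.
  have [S HS] := tail_small Hb (e := eps / 4) ltac:(lra).
  have [dl [Hdl HF]] : exists dl, 0 < dl /\ forall y, inD rho y -> vnorm (vsub y x) < dl ->
     forall xi : nat -> vec m, (forall i, (i < k)%nat -> vnorm (xi i) <= 1) ->
     vnorm (vsub (vsub (fun l => \big[Rplus/0]_(s < S) DQs s k y xi l) (fun l => \big[Rplus/0]_(s < S) DQs s k x xi l))
        (fun l => \big[Rplus/0]_(s < S) DQs s k.+1 x (scons (vsub y x) xi) l)) <= eps / 2 * vnorm (vsub y x).
    have HCS := Cr_sum (n := S) (Ps := Qs) (DPs := DQs) (fun j _ => HC j).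
    case: HCS => _ [_ [C3 _]]; apply C3 => //; lra.
  exists dl; split => // y Hy Hyx xi Hxi.
  set f1 := fun s => DQs s k y xi.
  set f2 := fun s => DQs s k x xi.
  set f3 := fun s => DQs s k.+1 x (scons (vsub y x) xi).
  have E1 := Hex k y xi Hk0 Hy.
  have E2 := Hex k x xi Hk0 Hx.
  have E3 := Hex k.+1 x (scons (vsub y x) xi) Hk1 Hx.
  have E12 : forall l, ex_series (fun s => vsub (f1 s) (f2 s) l).
    move=> l; apply: ex_series_sub; [apply E1 | apply E2].
  rewrite -(VS_sub E1 E2) -(VS_sub E12 E3).
  set rm := fun s => vsub (vsub (f1 s) (f2 s)) (f3 s).
  have Erm : forall l, ex_series (fun s => rm s l).
    move=> l; apply: ex_series_sub; [apply E12 | apply E3].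
  have Esplit := VS_split S Erm.
  have -> : VS rm = vadd (fun l => \big[Rplus/0]_(s < S) rm s l) (VS (fun t => rm (S + t)%nat)).
    rewrite -Esplit; apply functional_extensionality => l; rewrite /vadd /vsub; ring.
  apply: Rle_trans (vnorm_add _ _) _.
  have Hp : vnorm (fun l => \big[Rplus/0]_(s < S) rm s l) <= eps / 2 * vnorm (vsub y x).
    have := HF y Hy Hyx xi Hxi; rewrite rem_sum; done.
  have Ht : vnorm (VS (fun t => rm (S + t)%nat)) <= 2 * vnorm (vsub y x) * Series (fun t => b (S + t)%nat).
    rewrite -Series_scal_l.
    apply VS_bound.
    + move=> t; rewrite /rm /f1 /f2 /f3.
      apply: Rle_trans (Hrem _ _ _ _ _ Hk Hx Hy Hxi) _; apply Req_le; ring.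
    + apply: ex_series_scal_l; by apply ex_series_shift.
  have Hpos := vnorm_ge0 (vsub y x).
  have : 2 * vnorm (vsub y x) * Series (fun t => b (S + t)%nat) <= 2 * vnorm (vsub y x) * (eps / 4).
    apply Rmult_le_compat_l; first lra.
    apply: Rle_trans (Rle_abs _) _; lra.
  lra.
- move=> x Hx eps Heps.
  have [S HS] := tail_small Hb (e := eps / 4) ltac:(lra).
  have [dl [Hdl HF]] : exists dl, 0 < dl /\ forall y, inD rho y -> vnorm (vsub y x) < dl ->
     forall xi : nat -> vec m, (forall i, (i < r)%nat -> vnorm (xi i) <= 1) ->
     vnorm (vsub (fun l => \big[Rplus/0]_(s < S) DQs s r y xi l) (fun l => \big[Rplus/0]_(s < S) DQs s r x xi l))
        <= eps / 2.
    have HCS := Cr_sum (n := S) (Ps := Qs) (DPs := DQs) (fun j _ => HC j).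
    case: HCS => _ [_ [_ C4]]; apply C4 => //; lra.
  exists dl; split => // y Hy Hyx xi Hxi.
  have E1 := Hex r y xi (leqnn r) Hy.
  have E2 := Hex r x xi (leqnn r) Hx.
  rewrite -(VS_sub E1 E2).
  set rm := fun s => vsub (DQs s r y xi) (DQs s r x xi).
  have Erm : forall l, ex_series (fun s => rm s l).
    move=> l; apply: ex_series_sub; [apply E1 | apply E2].
  have Esplit := VS_split S Erm.
  have -> : VS rm = vadd (fun l => \big[Rplus/0]_(s < S) rm s l) (VS (fun t => rm (S + t)%nat)).
    rewrite -Esplit; apply functional_extensionality => l; rewrite /vadd /vsub; ring.
  apply: Rle_trans (vnorm_add _ _) _.
  have Hp : vnorm (fun l => \big[Rplus/0]_(s < S) rm s l) <= eps / 2.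
    have := HF y Hy Hyx xi Hxi; rewrite sub_sum; done.
  have Ht : vnorm (VS (fun t => rm (S + t)%nat)) <= 2 * Series (fun t => b (S + t)%nat).
    rewrite -Series_scal_l.
    apply VS_bound.
    + move=> t; rewrite /rm; apply: Rle_trans (vnorm_sub _ _) _.
      have := Hbd (S + t)%nat r y xi 1 (leqnn r) Hy ltac:(lra) Hxi.
      have := Hbd (S + t)%nat r x xi 1 (leqnn r) Hx ltac:(lra) Hxi.
      rewrite pow1; lra.
    + apply: ex_series_scal_l; by apply ex_series_shift.
  have : 2 * Series (fun t => b (S + t)%nat) <= 2 * (eps / 4).
    apply Rmult_le_compat_l; first lra.
    apply: Rle_trans (Rle_abs _) _; lra.
  lra.
Qed.

End Ser.

Set Implicit Arguments. Unset Strict Implicit.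

Lemma mv_bigsum n p N (A : mat n p) (F : 'I_N -> vec p) :
  mv A (fun i => \big[Rplus/0]_(j < N) F j i) = (fun i => \big[Rplus/0]_(j < N) mv A (F j) i).
Proof.
apply functional_extensionality => i; rewrite /mv.
under eq_bigr => k _ do rewrite big_distrr /=.
rewrite exchange_big /=; done.
Qed.

Lemma mv_opp n p (A : mat n p) (w : vec p) :
  mv A (fun i => - w i) = (fun i => - mv A w i).
Proof.
apply functional_extensionality => i; rewrite /mv -sumR_opp; apply eq_bigr => k _; ring.
Qed.

Lemma sum_recr (a : nat -> R) n : \big[Rplus/0]_(i < n.+1) a i = \big[Rplus/0]_(i < n) a i + a n.
Proof. by rewrite big_ord_recr. Qed.

Lemma sum_recl (a : nat -> R) n : \big[Rplus/0]_(i < n.+1) a i = a 0%nat + \big[Rplus/0]_(i < n) a i.+1.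
Proof. by rewrite big_ord_recl. Qed.

Lemma prefix_le (a : nat -> R) p n : (forall i, 0 <= a i) -> (p <= n)%nat ->
  \big[Rplus/0]_(i < p) a i <= \big[Rplus/0]_(i < n) a i.
Proof.
move=> Ha; elim: n => [|n IH] Hpn.
- have -> : p = 0%nat by apply/eqP; rewrite -leqn0.
  lra.
- rewrite sum_recr.
  case: (ltngtP p n.+1) => Hp.
  + have H1 := IH Hp; have := Ha n; lra.
  + exfalso; have := leq_trans Hp Hpn; by rewrite ltnn.
  + subst p; rewrite sum_recr; lra.
Qed.

Section Main.
Variables (m d : nat) (rho : R) (r N : nat) (B : nat -> mat d d) (B0inv : mat d d)
  (Lam : mat m m) (mu : R).
Hypotheses (rho0 : 0 < rho) (r1 : (1 <= r)%nat) (HBl : mmul B0inv (B 0%nat) = mid)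
  (HBr : mmul (B 0%nat) B0inv = mid) (Hlam : opnorm Lam ^ r <= mu) (Hmu : mu < 1)
  (Hq0 : \big[Rplus/0]_(1 <= i < N.+1) (mu ^ i * opnorm (mmul B0inv (B i))) < 1).

Definition Aj j := mmul B0inv (B j).

Fixpoint Ctab (n : nat) : nat -> mat d d :=
  match n with
  | O => fun _ => B0inv
  | S n' => fun k => if (k <= n')%nat then Ctab n' k else
      (fun i l => - \big[Rplus/0]_(j < N) (if (j <= n')%nat then mmul (Aj j.+1) (Ctab n' (n' - j)) i l else 0))
  end.

Definition Cm n := Ctab n n.
Definition pw s : mat m m := mpow Lam s.
Definition lam := opnorm Lam.
Definition wq (j : nat) := opnorm (Aj j.+1) * mu ^ j.+1.
Definition q := \big[Rplus/0]_(j < N) wq j.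
Definition ac s := opnorm (Cm s) * mu ^ s.

Lemma q_lt1 : q < 1.
Proof.
apply: Rle_lt_trans Hq0; apply Req_le.
rewrite /q big_add1 /= big_mkord; apply eq_bigr => j _; rewrite /wq /Aj /=; ring.
Qed.

Lemma lam0 : 0 <= lam. Proof. apply opnorm_ge0. Qed.

Lemma mu0 : 0 <= mu.
Proof. apply: Rle_trans Hlam; apply pow_le, lam0. Qed.

Lemma lam1 : lam <= 1.
Proof.
apply Rnot_lt_le => H.
have : 1 <= lam ^ r by apply pow_R1_Rle; lra.
rewrite /lam in H *; lra.
Qed.

Lemma q0 : 0 <= q.
Proof.
apply sumR_ge0 => j _; apply Rmult_le_pos; [apply opnorm_ge0 | apply pow_le, mu0].
Qed.

Lemma pw_bound s x : vnorm (mv (pw s) x) <= lam ^ s * vnorm x.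
Proof.
elim: s => [|s IH]; first by rewrite /pw /= mv_mid; lra.
rewrite /pw /= mv_mmul; apply: Rle_trans (mv_opnorm _ _) _.
rewrite -/(pw s) -/lam.
have := lam0 => H0.
have : lam * vnorm (mv (pw s) x) <= lam * (lam ^ s * vnorm x) by apply Rmult_le_compat_l.
lra.
Qed.

Lemma lampow_le1 s : lam ^ s <= 1.
Proof.
have := pow_incr lam 1 s ltac:(split; [apply lam0 | apply lam1]).
by rewrite pow1.
Qed.

Lemma lampow_ge0 s : 0 <= lam ^ s.
Proof. apply pow_le, lam0. Qed.

Lemma pw_contr s x : vnorm (mv (pw s) x) <= vnorm x.
Proof.
apply: Rle_trans (pw_bound s x) _.
have := lampow_le1 s; have := vnorm_ge0 x; have := lampow_ge0 s; nra.
Qed.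

Lemma pw_D s x : inD rho x -> inD rho (mv (pw s) x).
Proof. rewrite /inD => H; apply: Rle_trans (pw_contr s x) H. Qed.

Lemma lam_mu s : (lam ^ s) ^ r <= mu ^ s.
Proof.
rewrite -pow_mult Nat.mul_comm pow_mult; apply pow_incr; split; [apply pow_le, lam0 | exact Hlam].
Qed.

Lemma pw_add a b x : mv (pw (a + b)) x = mv (pw a) (mv (pw b) x).
Proof. by rewrite /pw mpow_add. Qed.

Lemma pw0 x : mv (pw 0) x = x.
Proof. by rewrite /pw /= mv_mid. Qed.

Lemma Ctab_ok n k : (k <= n)%nat -> Ctab n k = Cm k.
Proof.
elim: n k => [|n IH] k Hk.
- by have -> : k = 0%nat by apply/eqP; rewrite -leqn0.
- rewrite /=; case: (boolP (k <= n)%nat) => Hkn; first by apply IH.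
  have -> : k = n.+1 by apply/eqP; rewrite eqn_leq Hk ltnNge Hkn.
  by rewrite /Cm /= ltnn.
Qed.

Lemma Cm_rec n : Cm n.+1 =
  (fun i l => - \big[Rplus/0]_(j < N) (if (j <= n)%nat then mmul (Aj j.+1) (Cm (n - j)) i l else 0)).
Proof.
rewrite {1}/Cm /= ltnn.
apply functional_extensionality => i; apply functional_extensionality => l.
f_equal; apply eq_bigr => j _; case: (boolP (j <= n)%nat) => Hj //.
rewrite Ctab_ok //; apply leq_subr.
Qed.

Lemma Cm_rec_mv n v : mv (Cm n.+1) v =
  (fun i => - \big[Rplus/0]_(j < N) (if (j <= n)%nat then mv (Aj j.+1) (mv (Cm (n - j)) v) i else 0)).
Proof.
rewrite Cm_rec; apply functional_extensionality => i.
transitivity (- \big[Rplus/0]_(j < N) (if (j <= n)%nat then mv (mmul (Aj j.+1) (Cm (n - j))) v i else 0)).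
- rewrite {1}/mv.
  under eq_bigr => k _ do rewrite Ropp_mult_distr_l_reverse big_distrl /=.
  rewrite sumR_opp exchange_big /=; f_equal; apply eq_bigr => j _.
  case: (j <= n)%nat => //.
  rewrite big1 // => k _; ring.
- f_equal; apply eq_bigr => j _; case: (j <= n)%nat => //; by rewrite mv_mmul.
Qed.

Lemma Aj_B0 j w : mv (B 0%nat) (mv (Aj j) w) = mv (B j) w.
Proof. by rewrite /Aj !mv_mmul -mv_mmul HBr mv_mid. Qed.

Lemma Binv_id n v :
  (fun i => \big[Rplus/0]_(j < N.+1) (if (j <= n)%nat then mv (B j) (mv (Cm (n - j)) v) i else 0))
  = if n == 0%nat then v else vzero.
Proof.
apply functional_extensionality => i; rewrite big_ord_recl /=.
case: n => [|n] /=.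
- rewrite subn0 /Cm /= -mv_mmul HBr mv_mid big1; first ring.
  move=> j _; done.
- have E1 : mv (B 0%nat) (mv (Cm n.+1) v) i =
     - \big[Rplus/0]_(j < N) (if (j <= n)%nat then mv (B j.+1) (mv (Cm (n - j)) v) i else 0).
    rewrite Cm_rec_mv {1}/mv.
    under eq_bigr => k _ do rewrite Ropp_mult_distr_r_reverse big_distrr /=.
    rewrite sumR_opp exchange_big /=; f_equal; apply eq_bigr => j _.
    case: (j <= n)%nat.
    + by rewrite -Aj_B0.
    + rewrite big1 // => k _; ring.
  rewrite subn0 E1 /vzero.
  have E2 : forall j : 'I_N, (if (lift ord0 j <= n.+1)%nat then mv (B (lift ord0 j)) (mv (Cm (n.+1 - lift ord0 j)) v) i else 0)
     = (if (j <= n)%nat then mv (B j.+1) (mv (Cm (n - j)) v) i else 0).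
    move=> j; rewrite /= /bump /= add1n ltnS subSS; done.
  rewrite (eq_bigr _ (fun j _ => E2 j)); ring.
Qed.

Lemma ac0 s : 0 <= ac s.
Proof. apply Rmult_le_pos; [apply opnorm_ge0 | apply pow_le, mu0]. Qed.

Lemma wq0 j : 0 <= wq j.
Proof. apply Rmult_le_pos; [apply opnorm_ge0 | apply pow_le, mu0]. Qed.

Lemma ac_rec n : ac n.+1 <= \big[Rplus/0]_(j < N) (if (j <= n)%nat then wq j * ac (n - j) else 0).
Proof.
set K := \big[Rplus/0]_(j < N) (if (j <= n)%nat then opnorm (Aj j.+1) * opnorm (Cm (n - j)) else 0).
have K0 : 0 <= K.
  apply sumR_ge0 => j _; case: (j <= n)%nat; last lra.
  apply Rmult_le_pos; apply opnorm_ge0.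
have H : opnorm (Cm n.+1) <= K.
  apply opnorm_le => // x; rewrite Cm_rec_mv.
  apply vnorm_le; first by apply Rmult_le_pos => //; apply vnorm_ge0.
  move=> i; rewrite Rabs_Ropp; apply: Rle_trans (sumR_abs _ _ _) _.
  rewrite /K big_distrl /=; apply sumR_le => j _; case: (j <= n)%nat; last by rewrite Rabs_R0; lra.
  apply: Rle_trans (vnorm_coord _ _) _; apply: Rle_trans (mv_opnorm _ _) _.
  rewrite Rmult_assoc; apply Rmult_le_compat_l; first apply opnorm_ge0.
  apply mv_opnorm.
rewrite /ac.
apply: Rle_trans (Rmult_le_compat_r _ _ _ (pow_le _ _ mu0) H) _.
rewrite /K big_distrl; apply Req_le, eq_bigr => j _.
case: (boolP (j <= n)%nat) => Hj; last by rewrite /=; ring.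
rewrite /wq /ac.
have -> : (n.+1 = j.+1 + (n - j))%nat by rewrite addSn subnKC.
rewrite pow_add /=; ring.
Qed.

Lemma T_eq j n : \big[Rplus/0]_(k < n) (if (j <= k)%nat then ac (k - j) else 0) =
  \big[Rplus/0]_(i < n - j) ac i.
Proof.
elim: n => [|n IH]; first by rewrite sub0n !big_ord0.
rewrite (sum_recr (fun k => if (j <= k)%nat then ac (k - j) else 0)) IH.
case: (boolP (j <= n)%nat) => Hj.
- by rewrite subSn // sum_recr.
- have E1 : (n - j = 0)%nat by apply/eqP; rewrite subn_eq0; apply ltnW; rewrite ltnNge.
  have E2 : (n.+1 - j = 0)%nat by apply/eqP; rewrite subn_eq0 ltnNge.
  rewrite E1 E2; ring.
Qed.

Lemma S_bound n : \big[Rplus/0]_(i < n.+1) ac i <= ac 0%nat / (1 - q).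
Proof.
have Hq := q_lt1.
set S := \big[Rplus/0]_(i < n.+1) ac i.
suff : S <= ac 0%nat + q * S.
  move=> H; apply (Rmult_le_reg_r (1 - q)); first lra.
  have -> : ac 0%nat / (1 - q) * (1 - q) = ac 0%nat by field; lra.
  lra.
rewrite {1}/S sum_recl; apply Rplus_le_compat_l.
eapply Rle_trans.
  apply: (@sumR_le _ _ _ _ (fun k : 'I_n => \big[Rplus/0]_(j < N) (if (j <= k)%nat then wq j * ac (k - j) else 0))).
  move=> k _; apply ac_rec.
rewrite exchange_big /= /q big_distrl /=; apply sumR_le => j _.
have -> : \big[Rplus/0]_(i < n) (if (j <= i)%nat then wq j * ac (i - j) else 0) =
   wq j * \big[Rplus/0]_(i < n) (if (j <= i)%nat then ac (i - j) else 0).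
  rewrite big_distrr /=; apply eq_bigr => k _; case: (j <= k)%nat => //; ring.
rewrite T_eq; apply Rmult_le_compat_l; first apply wq0.
apply prefix_le; first apply ac0.
apply: leq_trans (leq_subr _ _) (leqnSn _).
Qed.

Lemma ac_ex : ex_series ac.
Proof. apply: (ex_series_bounded (M := ac 0%nat / (1 - q))); [apply ac0 | apply S_bound]. Qed.

End Main.

Set Implicit Arguments. Unset Strict Implicit.

Section Hn.
Variables (m d : nat) (rho : R) (r : nat).

Lemma derivs_fam (P : vec m -> vec d) DP : Cr_family rho r P DP -> Cr_family rho r P (derivs rho r P).
Proof. move=> H; rewrite /derivs; apply epsilon_spec; by exists DP. Qed.

Definition Hset (P : vec m -> vec d) :=
  (fun t => exists x, inD rho x /\ t = mlnorm r (derivs rho r P r x)).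

Lemma Hnorm_lub (P : vec m -> vec d) DP : 0 < rho -> Cr_family rho r P DP ->
  is_lub (Hset P) (Hnorm rho r P).
Proof.
move=> rho0 HC.
have HD := derivs_fam HC.
have [H [H0 HH]] := Cr_bounded (Rlt_le _ _ rho0) HD.
have Hz : inD rho (@vzero m) by rewrite /inD vnorm_zero; lra.
apply: (Rsup_lub (M := H) (t0 := mlnorm r (derivs rho r P r vzero))).
- move=> t [x [Hx ->]]; case: HD => _ [C2 _].
  apply mlnorm_le => //; [apply C2 | apply HH] => //.
- by exists vzero.
Qed.

Lemma Hnorm_ub (P : vec m -> vec d) DP z (xi : nat -> vec m) : 0 < rho -> Cr_family rho r P DP ->
  inD rho z -> (forall i, (i < r)%nat -> vnorm (xi i) <= 1) -> vnorm (DP r z xi) <= Hnorm rho r P.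
Proof.
move=> rho0 HC Hz Hxi.
have HD := derivs_fam HC.
rewrite (Cr_unique rho0 HC HD (leqnn r) Hz Hxi).
case: (HD) => _ [C2 _].
apply: Rle_trans (mlnorm_ub (C2 r z (leqnn r) Hz) Hxi) _.
case: (Hnorm_lub rho0 HC) => Hub _; apply Hub; by exists z.
Qed.

Lemma Hnorm_ge0 (P : vec m -> vec d) DP : 0 < rho -> Cr_family rho r P DP -> 0 <= Hnorm rho r P.
Proof.
move=> rho0 HC.
have HD := derivs_fam HC.
have Hz : inD rho (@vzero m) by rewrite /inD vnorm_zero; lra.
case: (Hnorm_lub rho0 HC) => Hub _.
apply: Rle_trans (Hub _ (ex_intro _ vzero (conj Hz (erefl _)))).
case: HD => _ [C2 _]; apply mlnorm_ge0; by apply C2.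
Qed.

Lemma Hnorm_le (P : vec m -> vec d) DP C : 0 < rho -> Cr_family rho r P DP -> 0 <= C ->
  (forall z, inD rho z -> UB r (DP r z) C) -> Hnorm rho r P <= C.
Proof.
move=> rho0 HC C0 HU.
have HD := derivs_fam HC.
case: (Hnorm_lub rho0 HC) => _ Hl; apply Hl => t [x [Hx ->]].
case: (HD) => _ [C2 _].
apply mlnorm_le => //; first by apply C2.
move=> xi Hxi; rewrite -(Cr_unique rho0 HC HD (leqnn r) Hx Hxi); by apply HU.
Qed.

End Hn.

Set Implicit Arguments. Unset Strict Implicit.

Section Ops.
Variables (m d : nat) (rho : R) (r N : nat) (B : nat -> mat d d) (B0inv : mat d d)
  (Lam : mat m m) (mu : R).
Hypotheses (rho0 : 0 < rho) (r1 : (1 <= r)%nat) (HBl : mmul B0inv (B 0%nat) = mid)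
  (HBr : mmul (B 0%nat) B0inv = mid) (Hlam : opnorm Lam ^ r <= mu) (Hmu : mu < 1)
  (Hq0 : \big[Rplus/0]_(1 <= i < N.+1) (mu ^ i * opnorm (mmul B0inv (B i))) < 1).

Local Notation Cms := (Cm N B B0inv).
Local Notation pws := (pw Lam).
Local Notation acs := (ac N B B0inv mu).
Local Notation lm := (lam Lam).

Definition pxi s (xi : nat -> vec m) := fun i => mv (pws s) (xi i).
Definition Mop (P : vec m -> vec d) (x : vec m) : vec d := VS (fun s => mv (Cms s) (P (mv (pws s) x))).
Definition DMop (DP : nat -> vec m -> mlmap m d) : nat -> vec m -> mlmap m d :=
  fun k x xi => VS (fun s => mv (Cms s) (DP k (mv (pws s) x) (pxi s xi))).

Lemma mv_seg (A : mat m m) x y t : mv A (seg x y t) = seg (mv A x) (mv A y) t.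
Proof.
have -> : seg x y t = vadd x (vscale t (vsub y x)).
  apply functional_extensionality => i; rewrite /seg /vadd /vscale /vsub; ring.
rewrite mv_add mv_scale mv_sub.
apply functional_extensionality => i; rewrite /seg /vadd /vscale /vsub; ring.
Qed.

Lemma pow_aux (L c H a : R) (k : nat) s :
  0 <= L -> L ^ r <= mu ^ s -> 0 <= c -> 0 <= H -> 0 <= a -> a <= L * rho -> (k <= r)%nat ->
  (L * c) ^ k * (H * a ^ (r - k)) <= c ^ k * (H * (rho + 1) ^ r * mu ^ s).
Proof.
move=> L0 HL c0 H0 a0 Ha Hk.
have E : (L * c) ^ k * (H * (L * rho) ^ (r - k)) = c ^ k * H * rho ^ (r - k) * L ^ r.
  rewrite !Rpow_mult_distr.
  have -> : L ^ r = L ^ k * L ^ (r - k) by rewrite -pow_add; f_equal; rewrite -/(addn k (r - k)) subnKC.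
  ring.
have H1 : a ^ (r - k) <= (L * rho) ^ (r - k) by apply pow_incr.
have H2 : rho ^ (r - k) <= (rho + 1) ^ r.
  apply: Rle_trans (pow_incr rho (rho + 1) (r - k) ltac:(lra)) _.
  apply Rle_pow; first lra. apply/leP; apply leq_subr.
have Hck : 0 <= c ^ k by apply pow_le.
have Hak : 0 <= a ^ (r - k) by apply pow_le.
have Hrk : 0 <= rho ^ (r - k) by apply pow_le; lra.
have HLr : 0 <= L ^ r by apply pow_le.
have HLk : 0 <= (L * c) ^ k by apply pow_le; nra.
apply Rle_trans with ((L * c) ^ k * (H * (L * rho) ^ (r - k))).
- apply Rmult_le_compat_l => //; apply Rmult_le_compat_l => //.
- rewrite E.
  have : c ^ k * H * rho ^ (r - k) * L ^ r <= c ^ k * H * (rho + 1) ^ r * L ^ r.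
    apply Rmult_le_compat_r => //; apply Rmult_le_compat_l => //; nra.
  have : c ^ k * H * (rho + 1) ^ r * L ^ r <= c ^ k * H * (rho + 1) ^ r * mu ^ s.
    apply Rmult_le_compat_l => //; apply Rmult_le_pos; [nra|apply pow_le; lra].
  lra.
Qed.

Section WithP.
Variables (P : vec m -> vec d) (DP : nat -> vec m -> mlmap m d) (H : R).
Hypotheses (HP : Cr_family rho r P DP) (HP0 : forall i, (i < r)%nat -> forall xi, DP i vzero xi = vzero)
  (Hh : 0 <= H) (Hr : forall z, inD rho z -> UB r (DP r z) H).

Definition GG := H * (rho + 1) ^ r.

Lemma GG0 : 0 <= GG.
Proof. apply Rmult_le_pos => //; apply pow_le; lra. Qed.

Lemma taylorP k z : (k <= r)%nat -> inD rho z -> UB k (DP k z) (H * vnorm z ^ (r - k)).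
Proof.
move=> Hk Hz; apply: (Cr_taylor HP HP0 Hh Hr) => //; by rewrite subnKC.
Qed.

Lemma term_bound s k x (xi : nat -> vec m) c : (k <= r)%nat -> inD rho x -> 0 <= c ->
  (forall i, (i < k)%nat -> vnorm (xi i) <= c) ->
  vnorm (mv (Cms s) (DP k (mv (pws s) x) (pxi s xi))) <= c ^ k * (GG * acs s).
Proof.
move=> Hk Hx c0 Hxi.
have HxD := pw_D Hlam Hmu s Hx.
case: HP => _ [C2 _].
apply: Rle_trans (mv_opnorm _ _) _.
have Hc0 := opnorm_ge0 (Cms s).
have L0 := lampow_ge0 Lam s.
have Hb : vnorm (DP k (mv (pws s) x) (pxi s xi)) <= (lm ^ s * c) ^ k * (H * vnorm (mv (pws s) x) ^ (r - k)).
  apply: (UB_scale (C2 k _ Hk HxD) (taylorP Hk HxD)); first by nra.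
  move=> i Hi; rewrite /pxi; apply: Rle_trans (pw_bound Lam _ _) _.
  apply Rmult_le_compat_l => //; by apply Hxi.
have Hb2 := pow_aux (L := lm ^ s) (c := c) (H := H) (a := vnorm (mv (pws s) x)) (k := k) (s := s)
   L0 (lam_mu Hlam s) c0 Hh (vnorm_ge0 _)
   ltac:(apply: Rle_trans (pw_bound Lam _ _) _; apply Rmult_le_compat_l => //) Hk.
rewrite /GG /ac.
have : vnorm (DP k (mv (pws s) x) (pxi s xi)) <= c ^ k * (H * (rho + 1) ^ r * mu ^ s) by lra.
move=> H3.
have := Rmult_le_compat_l _ _ _ Hc0 H3.
move=> H4; apply: Rle_trans H4 _; apply Req_le; ring.
Qed.

Lemma rem_bound s k x y (xi : nat -> vec m) : (k < r)%nat -> inD rho x -> inD rho y ->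
  (forall i, (i < k)%nat -> vnorm (xi i) <= 1) ->
  vnorm (vsub (vsub (mv (Cms s) (DP k (mv (pws s) y) (pxi s xi))) (mv (Cms s) (DP k (mv (pws s) x) (pxi s xi))))
     (mv (Cms s) (DP k.+1 (mv (pws s) x) (pxi s (scons (vsub y x) xi))))) <=
  2 * (GG * acs s) * vnorm (vsub y x).
Proof.
move=> Hk Hx Hy Hxi.
have HxD := pw_D Hlam Hmu s Hx.
have HyD := pw_D Hlam Hmu s Hy.
case: (HP) => _ [C2 _].
have L0 := lampow_ge0 Lam s.
have Heta : forall i, (i < k)%nat -> vnorm (pxi s xi i) <= 1.
  move=> i Hi; rewrite /pxi; apply: Rle_trans (pw_contr Hlam Hmu _ _) _; by apply Hxi.
have Heta2 : forall i, (i < k)%nat -> vnorm (pxi s xi i) <= lm ^ s.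
  move=> i Hi; rewrite /pxi; apply: Rle_trans (pw_bound Lam _ _) _.
  have := Hxi i Hi; nra.
rewrite /pxi mapA_scons -/(pxi s xi) mv_sub -!mv_sub.
apply: Rle_trans (mv_opnorm _ _) _.
have Hyx := vnorm_ge0 (vsub y x).
have Huv : vnorm (vsub (mv (pws s) y) (mv (pws s) x)) <= lm ^ s * vnorm (vsub y x).
  rewrite -mv_sub; apply pw_bound.
have HK : forall t, 0 <= t <= 1 ->
   vnorm (DP k.+1 (seg (mv (pws s) x) (mv (pws s) y) t) (scons (vsub (mv (pws s) y) (mv (pws s) x)) (pxi s xi)))
    <= vnorm (vsub y x) * (GG * mu ^ s).
  move=> t Ht.
  have HsD : inD rho (seg x y t) by apply inD_seg.
  rewrite -mv_seg.
  have HwD := pw_D Hlam Hmu s HsD.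
  have H1 := UB_slot0_c (vsub (mv (pws s) y) (mv (pws s) x)) (C2 k.+1 _ Hk HwD) (taylorP Hk HwD) L0 Heta2.
  apply: Rle_trans H1 _.
  have Hw : vnorm (mv (pws s) (seg x y t)) <= lm ^ s * rho.
    apply: Rle_trans (pw_bound Lam _ _) _; apply Rmult_le_compat_l => //.
  have Hpa := pow_aux (L := lm ^ s) (c := 1) (H := H) (a := vnorm (mv (pws s) (seg x y t))) (k := k.+1) (s := s)
     L0 (lam_mu Hlam s) ltac:(lra) Hh (vnorm_ge0 _) Hw Hk.
  rewrite pow1 Rmult_1_l Rmult_1_r in Hpa.
  rewrite /GG.
  have Hwp : 0 <= H * vnorm (mv (pws s) (seg x y t)) ^ (r - k.+1).
    apply Rmult_le_pos => //; apply pow_le, vnorm_ge0.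
  have Hlk : 0 <= (lm ^ s) ^ k by apply pow_le.
  have E : (lm ^ s) ^ k.+1 = lm ^ s * (lm ^ s) ^ k by [].
  rewrite E in Hpa.
  have : vnorm (vsub (mv (pws s) y) (mv (pws s) x)) * ((lm ^ s) ^ k * (H * vnorm (mv (pws s) (seg x y t)) ^ (r - k.+1)))
     <= lm ^ s * vnorm (vsub y x) * ((lm ^ s) ^ k * (H * vnorm (mv (pws s) (seg x y t)) ^ (r - k.+1))).
    apply Rmult_le_compat_r => //; nra.
  have : lm ^ s * vnorm (vsub y x) * ((lm ^ s) ^ k * (H * vnorm (mv (pws s) (seg x y t)) ^ (r - k.+1)))
    = vnorm (vsub y x) * (lm ^ s * (lm ^ s) ^ k * (H * vnorm (mv (pws s) (seg x y t)) ^ (r - k.+1))) by ring.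
  have : vnorm (vsub y x) * (lm ^ s * (lm ^ s) ^ k * (H * vnorm (mv (pws s) (seg x y t)) ^ (r - k.+1)))
     <= vnorm (vsub y x) * (H * (rho + 1) ^ r * mu ^ s) by apply Rmult_le_compat_l.
  lra.
have := Cr_rem HP Hk HyD HxD Heta HK.
move=> H2; have Hc0 := opnorm_ge0 (Cms s).
have := Rmult_le_compat_l _ _ _ Hc0 H2.
move=> H3; rewrite (mv_sub (pws s)); eapply Rle_trans; first exact H3. rewrite /ac; apply Req_le; ring.
Qed.

Lemma ac_ex' : ex_series acs.
Proof. exact: (ac_ex Hlam Hq0). Qed.

Lemma M_family : Cr_family rho r (Mop P) (DMop DP).
Proof.
apply: (Cr_series (Qs := fun s x => mv (Cms s) (P (mv (pws s) x)))
                  (DQs := fun s k x xi => mv (Cms s) (DP k (mv (pws s) x) (pxi s xi)))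
                  (b := fun s => GG * acs s)).
- move=> s; apply: Cr_comp HP _ => x; apply: pw_contr Hlam Hmu _ _.
- move=> s; apply Rmult_le_pos; [apply GG0 | exact: (ac0 N B B0inv Hlam s)].
- apply: ex_series_scal_l; apply ac_ex'.
- move=> s k x xi c Hk Hx c0 Hxi; by apply term_bound.
- move=> s k x y xi Hk Hx Hy Hxi; by apply rem_bound.
Qed.

Lemma M_zero i : (i < r)%nat -> forall xi, DMop DP i vzero xi = vzero.
Proof.
move=> Hi xi; apply functional_extensionality => l; rewrite /DMop /VS /vzero.
have E : forall s, mv (Cms s) (DP i (mv (pws s) vzero) (pxi s xi)) l = 0 * acs s.
  move=> s; rewrite mv_zero HP0 // mv_zero /vzero; ring.
rewrite (Series_ext _ _ E) Series_scal_l; ring.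
Qed.

Lemma M_rbound z (xi : nat -> vec m) : inD rho z -> (forall i, (i < r)%nat -> vnorm (xi i) <= 1) ->
  vnorm (DMop DP r z xi) <= GG * Series acs.
Proof.
move=> Hz Hxi; rewrite /DMop -Series_scal_l.
apply VS_bound; last by apply: ex_series_scal_l; apply ac_ex'.
move=> s; have := term_bound s (leqnn r) Hz (c := 1) ltac:(lra) Hxi.
rewrite pow1 Rmult_1_l; done.
Qed.

Lemma M_bnd x s : inD rho x -> vnorm (mv (Cms s) (P (mv (pws s) x))) <= GG * acs s.
Proof.
move=> Hx.
have := term_bound s (k := 0) (xi := fun _ => vzero) (leq0n r) Hx (c := 1) ltac:(lra) (fun i Hi => ltac:(done)).
case: HP => C1 _; rewrite C1; last exact: (pw_D Hlam Hmu s Hx).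
rewrite /= Rmult_1_l; done.
Qed.

Lemma M_ex x : inD rho x -> forall l, ex_series (fun s => mv (Cms s) (P (mv (pws s) x)) l).
Proof.
move=> Hx; apply: (VS_ex (b := fun s => GG * acs s)).
- move=> s; by apply M_bnd.
- apply: ex_series_scal_l; apply ac_ex'.
Qed.

End WithP.
End Ops.

Set Implicit Arguments. Unset Strict Implicit.

Section Gen.
Variables (m d : nat) (rho : R) (r : nat).

Lemma Cr_neg (G : vec m -> vec d) DG : Cr_family rho r G DG ->
  Cr_family rho r (fun x => vscale (-1) (G x)) (fun k x xi => vscale (-1) (DG k x xi)).
Proof.
move=> HG.
have H := Cr_comp (fun i j => - (@mid d) i j) (A := @mid m) HG (fun x => ltac:(rewrite mv_mid; lra)).
have Em : forall v : vec d, mv (fun i j => - (@mid d) i j) v = vscale (-1) v.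
  move=> v; have -> : (fun i j => - (@mid d) i j) = (fun i j => -1 * (@mid d) i j).
    apply functional_extensionality => i; apply functional_extensionality => j; ring.
  apply functional_extensionality => i; rewrite /vscale -{2}(mv_mid v) /mv big_distrr /=.
  apply eq_bigr => j _; ring.
apply: (Cr_ext H).
- move=> x _; by rewrite Em mv_mid.
- move=> k x xi _; rewrite Em mv_mid; f_equal; f_equal.
  apply functional_extensionality => i; by rewrite mv_mid.
Qed.

Lemma Cr_sub (F G : vec m -> vec d) DF DG : Cr_family rho r F DF -> Cr_family rho r G DG ->
  Cr_family rho r (fun x => vsub (F x) (G x)) (fun k x xi => vsub (DF k x xi) (DG k x xi)).
Proof.
move=> HF HG.
have H := Cr_sum (n := 2) (Ps := fun j => if j == 0%nat then F else (fun x => vscale (-1) (G x)))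
   (DPs := fun j => if j == 0%nat then DF else (fun k x xi => vscale (-1) (DG k x xi)))
   (fun j Hj => ltac:(case: j Hj => [|j] Hj /=; [exact HF | exact: Cr_neg HG])).
apply: (Cr_ext H).
- move=> x _; apply functional_extensionality => l; rewrite !big_ord_recr big_ord0 /= /vsub /vscale; ring.
- move=> k x xi _; apply functional_extensionality => l; rewrite !big_ord_recr big_ord0 /= /vsub /vscale; ring.
Qed.

End Gen.

Section Ops2.
Variables (m d : nat) (rho : R) (r N : nat) (B : nat -> mat d d) (B0inv : mat d d)
  (Lam : mat m m) (mu : R).
Hypotheses (rho0 : 0 < rho) (r1 : (1 <= r)%nat) (HBl : mmul B0inv (B 0%nat) = mid)
  (HBr : mmul (B 0%nat) B0inv = mid) (Hlam : opnorm Lam ^ r <= mu) (Hmu : mu < 1)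
  (Hq0 : \big[Rplus/0]_(1 <= i < N.+1) (mu ^ i * opnorm (mmul B0inv (B i))) < 1).

Local Notation Cms := (Cm N B B0inv).
Local Notation pws := (pw Lam).
Local Notation acs := (ac N B B0inv mu).
Local Notation lm := (lam Lam).
Local Notation Lp := (Lop N B Lam).
Local Notation Mp := (Mop N B B0inv Lam).

Definition DLop (DP : nat -> vec m -> mlmap m d) : nat -> vec m -> mlmap m d :=
  fun k x xi l => \big[Rplus/0]_(j < N.+1) mv (B j) (DP k (mv (pws j) x) (pxi Lam j xi)) l.

Lemma L_family (P : vec m -> vec d) DP : Cr_family rho r P DP -> Cr_family rho r (Lp P) (DLop DP).
Proof.
move=> HP.
have H := Cr_sum (n := N.+1) (Ps := fun j x => mv (B j) (P (mv (pws j) x)))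
   (DPs := fun j k x xi => mv (B j) (DP k (mv (pws j) x) (pxi Lam j xi)))
   (fun j _ => Cr_comp (B j) (A := pws j) HP (pw_contr Hlam Hmu j)).
apply: (Cr_ext H) => //.
Qed.

Lemma L_zero DP : (forall i, (i < r)%nat -> forall xi, DP i vzero xi = vzero) ->
  forall i, (i < r)%nat -> forall xi, DLop DP i vzero xi = vzero.
Proof.
move=> H0 i Hi xi; apply functional_extensionality => l; rewrite /DLop /vzero big1 // => j _.
by rewrite mv_zero H0 // mv_zero.
Qed.

Lemma Lop_sub (F G : vec m -> vec d) x : Lp (fun y => vsub (F y) (G y)) x = vsub (Lp F x) (Lp G x).
Proof.
apply functional_extensionality => l; rewrite /Lop /vsub /Rminus -sumR_opp -big_split /=.
apply eq_bigr => j _; rewrite mv_sub /vsub; ring.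
Qed.

Section WP.
Variables (P : vec m -> vec d) (DP : nat -> vec m -> mlmap m d) (H : R).
Hypotheses (HP : Cr_family rho r P DP) (HP0 : forall i, (i < r)%nat -> forall xi, DP i vzero xi = vzero)
  (Hh : 0 <= H) (Hr : forall z, inD rho z -> UB r (DP r z) H).

Lemma LM_id x : inD rho x -> Lp (Mp P) x = P x.
Proof.
move=> Hx; apply functional_extensionality => l; rewrite /Lop.
set g := fun (j : nat) s => mv (B j) (mv (Cms s) (P (mv (pws s) (mv (pws j) x)))) l.
have Hg : forall j, ex_series (g j).
  move=> j; apply: (ex_series_cmp (b := fun s => opnorm (B j) * (GG rho r H * acs s))).
  - move=> s; rewrite /g; apply: Rle_trans (vnorm_coord _ l) _.
    apply: Rle_trans (mv_opnorm _ _) _; apply Rmult_le_compat_l; first apply opnorm_ge0.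
    apply: (M_bnd N B B0inv rho0 Hlam Hmu HP HP0 Hh Hr).
    exact: (pw_D Hlam Hmu j Hx).
  - apply: ex_series_scal_l; apply: ex_series_scal_l; exact: (ac_ex Hlam Hq0).
have E1 : forall j : 'I_N.+1, mv (B j) (Mp P (mv (pws j) x)) l =
    Series (fun n => if (j <= n)%nat then g j (n - j)%nat else 0).
  move=> j; rewrite Series_shiftj //.
  rewrite /Mop mv_VS; first done.
  exact: (M_ex rho0 Hlam Hmu Hq0 HP HP0 Hh Hr (pw_D Hlam Hmu j Hx)).
rewrite (eq_bigr _ (fun j _ => E1 j)).
have Hex : forall j : 'I_N.+1, ex_series (fun n => if (j <= n)%nat then g j (n - j)%nat else 0).
  move=> j; apply ex_series_shiftj, Hg.
rewrite -(proj2 (Series_bigsum Hex)).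
have E2 : forall n, \big[Rplus/0]_(j < N.+1) (if (j <= n)%nat then g j (n - j)%nat else 0) =
    (if n == 0%nat then P x l else 0).
  move=> n.
  have := f_equal (fun f => f l) (Binv_id N HBr n (P (mv (pws n) x))).
  rewrite /=; move=> E.
  have E' : (if n == 0%nat then P (mv (pws n) x) else vzero) l = (if n == 0%nat then P x l else 0).
    case: (eqVneq n 0%nat) => [->|Hn] //=; by rewrite pw0.
  rewrite -E' -E; apply eq_bigr => j _; rewrite /g.
  case: (boolP (j <= n)%nat) => Hj //.
  by rewrite -pw_add subnK.
rewrite (Series_ext _ _ E2); apply Series_delta.
Qed.

End WP.

Lemma inj_L (F : vec m -> vec d) DF : Cr_family rho r F DF ->
  (forall i, (i < r)%nat -> forall xi, DF i vzero xi = vzero) ->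
  (forall z, inD rho z -> Lp F z = vzero) -> forall z, inD rho z -> F z = vzero.
Proof.
move=> HF HF0 HL.
have [H [Hh Hr]] := Cr_bounded (Rlt_le _ _ rho0) HF.
have Htay : forall z, inD rho z -> vnorm (F z) <= H * vnorm z ^ r.
  move=> z Hz.
  have := Cr_taylor HF HF0 Hh Hr (j := r) (k := 0) (add0n r) Hz (xi := fun _ => vzero) (fun i Hi => ltac:(done)).
  case: HF => C1 _; by rewrite C1.
set qq := q N B B0inv mu.
have q0 : 0 <= qq by apply: (q0 N B B0inv Hlam).
have q1 : qq < 1 by apply: (q_lt1 Hq0).
have Hrec : forall z, inD rho z -> F z = (fun i => - \big[Rplus/0]_(j < N) mv (Aj B B0inv j.+1) (F (mv (pws j.+1) z)) i).
  move=> z Hz.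
  have E := f_equal (mv B0inv) (HL z Hz).
  rewrite mv_zero /Lop mv_bigsum in E.
  apply functional_extensionality => i.
  have E' : \big[Rplus/0]_(j < N.+1) mv B0inv (mv (B j) (F (mv (mpow Lam j) z))) i = 0.
    exact: (f_equal (fun f => f i) E).
  rewrite (sum_recl (fun j => mv B0inv (mv (B j) (F (mv (mpow Lam j) z))) i)) in E'.
  rewrite -mv_mmul HBl mv_mid in E'.
  change (mpow Lam 0) with (@mid m) in E'; rewrite mv_mid in E'.
  have E3 : \big[Rplus/0]_(j < N) mv B0inv (mv (B j.+1) (F (mv (mpow Lam j.+1) z))) i =
         \big[Rplus/0]_(j < N) mv (Aj B B0inv j.+1) (F (mv (pws j.+1) z)) i.
    apply eq_bigr => j _; rewrite /Aj mv_mmul; done.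
  lra.
have Hind : forall n z, inD rho z -> vnorm (F z) <= qq ^ n * (H * vnorm z ^ r).
  elim=> [|n IH] z Hz; first by rewrite /= Rmult_1_l; apply Htay.
  rewrite (Hrec z Hz).
  apply vnorm_le; first by apply Rmult_le_pos; [apply pow_le | apply Rmult_le_pos => //; apply pow_le, vnorm_ge0].
  move=> i; rewrite Rabs_Ropp; apply: Rle_trans (sumR_abs _ _ _) _.
  have -> : qq ^ n.+1 * (H * vnorm z ^ r) = \big[Rplus/0]_(j < N) (wq B B0inv mu j * (qq ^ n * (H * vnorm z ^ r))).
    rewrite -big_distrl /= -/(q N B B0inv mu) -/qq /=; ring.
  apply sumR_le => j _.
  apply: Rle_trans (vnorm_coord _ _) _; apply: Rle_trans (mv_opnorm _ _) _.
  have Hzj := pw_D Hlam Hmu j.+1 Hz.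
  have := IH _ Hzj.
  have Hpz : vnorm (mv (pws j.+1) z) ^ r <= (lm ^ j.+1) ^ r * vnorm z ^ r.
    rewrite -Rpow_mult_distr; apply pow_incr; split; [apply vnorm_ge0 | apply pw_bound].
  have Hlm := lam_mu Hlam j.+1.
  have Hqn : 0 <= qq ^ n by apply pow_le.
  have Hzr : 0 <= vnorm z ^ r by apply pow_le, vnorm_ge0.
  have HA := opnorm_ge0 (Aj B B0inv j.+1).
  move=> H1.
  have H2 : vnorm (F (mv (pws j.+1) z)) <= qq ^ n * (H * (mu ^ j.+1 * vnorm z ^ r)).
    apply: Rle_trans H1 _; apply Rmult_le_compat_l => //; apply Rmult_le_compat_l => //.
    apply: Rle_trans Hpz _; apply Rmult_le_compat_r => //.
  have := Rmult_le_compat_l _ _ _ HA H2.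
  move=> H3; apply: Rle_trans H3 _; rewrite /wq; apply Req_le; ring.
move=> z Hz.
apply vnorm_eq0.
set K := H * vnorm z ^ r.
have K0 : 0 <= K by apply Rmult_le_pos => //; apply pow_le, vnorm_ge0.
apply: (le_eps (c := K)); [apply vnorm_ge0 | done | ].
move=> e He.
have [n Hn] := pow_lt_1_zero qq ltac:(rewrite Rabs_right; lra) e He.
have := Hn n (le_n n); rewrite Rabs_right; last by apply Rle_ge, pow_le.
move=> H1; apply: Rle_trans (Hind n z Hz) _.
apply Rmult_le_compat_r => //; lra.
Qed.

End Ops2.

Unset Implicit Arguments. Set Strict Implicit.

Theorem mainTheorem13 (m d : nat) (rho : R) (r N : nat)
  (B : nat -> mat d d) (B0inv : mat d d) (Lam : mat m m) (mu : R) :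
  0 < rho ->
  (1 <= r)%nat ->
  mmul B0inv (B 0%nat) = mid -> mmul (B 0%nat) B0inv = mid ->
  (opnorm Lam) ^ r <= mu -> mu < 1 ->
  \big[Rplus/0]_(1 <= i < N.+1) (mu ^ i * opnorm (mmul B0inv (B i))) < 1 ->
  (* L is well defined: H_r -> H_r *)
  (forall P, inH rho r P -> inH rho r (Lop N B Lam P)) /\
  (* L is invertible with bounded (linear) inverse M *)
  exists M : (vec m -> vec d) -> (vec m -> vec d),
    (forall P, inH rho r P -> inH rho r (M P)) /\
    (forall P Q, inH rho r P -> inH rho r Q -> (forall x, inD rho x -> P x = Q x) ->
       forall x, inD rho x -> M P x = M Q x) /\
    (forall P Q a b, inH rho r P -> inH rho r Q -> forall x, inD rho x ->
       M (fun y => vadd (vscale a (P y)) (vscale b (Q y))) x =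
       vadd (vscale a (M P x)) (vscale b (M Q x))) /\
    (forall P, inH rho r P -> forall x, inD rho x -> M (Lop N B Lam P) x = P x) /\
    (forall P, inH rho r P -> forall x, inD rho x -> Lop N B Lam (M P) x = P x) /\
    (exists C, 0 <= C /\ forall P, inH rho r P -> Hnorm rho r (M P) <= C * Hnorm rho r P).
Proof.
move=> rho0 r1 HBl HBr Hlam Hmu Hq0.
have Bnd : forall (P : vec m -> vec d) DP, Cr_family rho r P DP ->
    0 <= Hnorm rho r P /\ forall z, inD rho z -> UB r (DP r z) (Hnorm rho r P).
  move=> P DP HP; split; first exact (Hnorm_ge0 rho0 HP).
  move=> z Hz xi Hxi; exact: (Hnorm_ub rho0 HP Hz Hxi).
have LH : forall P : vec m -> vec d, inH rho r P -> inH rho r (Lop N B Lam P).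
  move=> P [DP [HP HP0]]; exists (DLop N B Lam DP); split.
  - exact: (L_family N B Hlam Hmu HP).
  - exact: (L_zero N B Lam HP0).
have MH : forall P : vec m -> vec d, inH rho r P -> inH rho r (Mop N B B0inv Lam P).
  move=> P [DP [HP HP0]]; have [Hh Hr] := Bnd P DP HP.
  exists (DMop N B B0inv Lam DP); split.
  - exact: (M_family rho0 Hlam Hmu Hq0 HP HP0 Hh Hr).
  - exact: (M_zero N B B0inv Lam mu HP0).
have LMid : forall P : vec m -> vec d, inH rho r P -> forall x, inD rho x -> Lop N B Lam (Mop N B B0inv Lam P) x = P x.
  move=> P [DP [HP HP0]] x Hx; have [Hh Hr] := Bnd P DP HP.
  exact: (LM_id rho0 HBr Hlam Hmu Hq0 HP HP0 Hh Hr Hx).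
split => //.
exists (Mop N B B0inv Lam); split => //; split; [|split; [|split; [|split]]] => //.
- move=> P Q _ _ Heq x Hx; apply VS_ext => s; rewrite Heq //.
  exact: (pw_D Hlam Hmu s Hx).
- move=> P Q a b [DP [HP HP0]] [DQ [HQ HQ0]] x Hx.
  have [Hh Hr] := Bnd P DP HP; have [Hh' Hr'] := Bnd Q DQ HQ.
  rewrite /Mop -VS_lin.
  + apply VS_ext => s; by rewrite mv_lin.
  + exact: (M_ex rho0 Hlam Hmu Hq0 HP HP0 Hh Hr Hx).
  + exact: (M_ex rho0 Hlam Hmu Hq0 HQ HQ0 Hh' Hr' Hx).
- move=> P HPH x Hx.
  have HLP := LH P HPH.
  case: (HPH) => [DP [HP HP0]].
  case: (HLP) => [DL [HL HL0]].
  have HMLP := MH _ HLP.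
  case: (HMLP) => [DM [HM HM0]].
  set F := fun y => vsub (Mop N B B0inv Lam (Lop N B Lam P) y) (P y).
  have HF := Cr_sub HM HP.
  have HF0 : forall i, (i < r)%nat -> forall xi, vsub (DM i vzero xi) (DP i vzero xi) = vzero.
    move=> i Hi xi; rewrite HM0 // HP0 //; apply functional_extensionality => l; rewrite /vsub /vzero; ring.
  have HLF : forall z, inD rho z -> Lop N B Lam F z = vzero.
    move=> z Hz; rewrite /F Lop_sub (LMid _ HLP z Hz).
    apply functional_extensionality => l; rewrite /vsub /vzero; ring.
  have := inj_L rho0 HBl Hlam Hmu Hq0 HF HF0 HLF Hx.
  rewrite /F => E; apply functional_extensionality => l.
  have := f_equal (fun f => f l) E; rewrite /vsub /vzero /=; lra.
- exists ((rho + 1) ^ r * Series (ac N B B0inv mu)); split.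
  + apply Rmult_le_pos; first by apply pow_le; lra.
    apply Series_ge0; [move=> s; exact: (ac0 N B B0inv Hlam s) | exact: (ac_ex Hlam Hq0)].
  + move=> P [DP [HP HP0]]; have [Hh Hr] := Bnd P DP HP.
    have HM := M_family rho0 Hlam Hmu Hq0 HP HP0 Hh Hr.
    apply: (Hnorm_le rho0 HM).
    * apply Rmult_le_pos => //; apply Rmult_le_pos; first by apply pow_le; lra.
      apply Series_ge0; [move=> s; exact: (ac0 N B B0inv Hlam s) | exact: (ac_ex Hlam Hq0)].
    * move=> z Hz xi Hxi.
      apply: Rle_trans (M_rbound rho0 Hlam Hmu Hq0 HP HP0 Hh Hr Hz Hxi) _.
      rewrite /GG; apply Req_le; ring.
Qed.
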